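(* Let $\mathbb Z\langle X\rangle$ be the free unital associative ring on $X=\{x_1,x_2,\dots\}$ and let $T^{(4)}$ be its two-sided ideal generated by all $[a_1,a_2,a_3,a_4]$ ($a_i\in\mathbb Z\langle X\rangle$). Then $T^{(4)}$ is generated as a left ideal of $\mathbb Z\langle X\rangle$ by the polynomials \begin{gather*} [x_{i_1},x_{i_2},\dots,x_{i_k}]\quad(k\ge4,\ i_l\in\mathbb N),\qquad [x_{i_1},x_{i_2},x_{i_3}][x_{i_4},x_{i_5},x_{i_6}]\quad(i_l\in\mathbb N),\\ [x_{i_1},x_{i_2}][x_{i_3},x_{i_4},x_{i_5}]-\operatorname{sgn}(\sigma)[x_{i_{\sigma(1)}},x_{i_{\sigma(2)}}][x_{i_{\sigma(3)}},x_{i_{\sigma(4)}},x_{i_{\sigma(5)}}]\quad(i_l\in\mathbb N,\ \sigma\in S_5),\\ [x_{i_1},x_{i_2}][x_{i_3},x_{i_4}][x_{i_5},x_{i_6}]-\operatorname{sgn}(\sigma)[x_{i_{\sigma(1)}},x_{i_{\sigma(2)}}][x_{i_{\sigma(3)}},x_{i_{\sigma(4)}}][x_{i_{\sigma(5)}},x_{i_{\sigma(6)}}]\quad(i_l\in\mathbb N,\ \sigma\in S_6). \end{gather*}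
   Context: Commutators are left-normed: $[a,b]=ab-ba$, $[a_1,\dots,a_n]=[[a_1,\dots,a_{n-1}],a_n]$. *)

(* Defs.v *)
(* Z<X> is the monoid algebra over int of the free monoid
   {fmonom nat} (words over nat) from multinomials' monalg. *)
From HB Require Import structures.
From mathcomp Require Import all_boot all_order all_algebra all_fingroup.
From mathcomp.multinomials Require Import monalg.
Set Implicit Arguments. Unset Strict Implicit. Unset Printing Implicit Defensive.
Import Order.TTheory GRing.Theory Num.Theory.
Local Open Scope ring_scope.

Definition ZX : Type := {malg int[{fmonom nat}]}.

Definition xv (i : nat) : ZX := << fmu i >>.

Definition comm (a b : ZX) : ZX := a * b - b * a.

Definition lcomm (a : ZX) (s : seq ZX) : ZX := foldl comm a s.

Inductive ideal2 (S : ZX -> Prop) : ZX -> Prop :=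
| ideal2_gen s : S s -> ideal2 S s
| ideal2_0 : ideal2 S 0
| ideal2_add a b : ideal2 S a -> ideal2 S b -> ideal2 S (a + b)
| ideal2_opp a : ideal2 S a -> ideal2 S (- a)
| ideal2_mull r a : ideal2 S a -> ideal2 S (r * a)
| ideal2_mulr a r : ideal2 S a -> ideal2 S (a * r).

Inductive lideal (S : ZX -> Prop) : ZX -> Prop :=
| lideal_gen s : S s -> lideal S s
| lideal_0 : lideal S 0
| lideal_add a b : lideal S a -> lideal S b -> lideal S (a + b)
| lideal_opp a : lideal S a -> lideal S (- a)
| lideal_mull r a : lideal S a -> lideal S (r * a).

Definition T4gens (f : ZX) : Prop :=
  exists a1 a2 a3 a4 : ZX, f = lcomm a1 [:: a2; a3; a4].

Definition T4 : ZX -> Prop := ideal2 T4gens.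

Definition sgn n (s : 'S_n) : ZX := (-1) ^+ odd_perm s.

Definition p23 (i : 'I_5 -> nat) : ZX :=
  let y k := xv (i (inord k)) in
  comm (y 0%N) (y 1%N) * lcomm (y 2%N) [:: y 3%N; y 4%N].

Definition p222 (i : 'I_6 -> nat) : ZX :=
  let y k := xv (i (inord k)) in
  comm (y 0%N) (y 1%N) * comm (y 2%N) (y 3%N) * comm (y 4%N) (y 5%N).

Definition p33 (i : 'I_6 -> nat) : ZX :=
  let y k := xv (i (inord k)) in
  lcomm (y 0%N) [:: y 1%N; y 2%N] * lcomm (y 3%N) [:: y 4%N; y 5%N].

Definition Gens (f : ZX) : Prop :=
  (exists (i1 : nat) (s : seq nat), (3 <= size s)%N /\ f = lcomm (xv i1) (map xv s))
  \/ (exists i : 'I_6 -> nat, f = p33 i)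
  \/ (exists (i : 'I_5 -> nat) (s : 'S_5), f = p23 i - sgn s * p23 (i \o s))
  \/ (exists (i : 'I_6 -> nat) (s : 'S_6), f = p222 i - sgn s * p222 (i \o s)).

(* Main.v *)
Require Import Defs.
From mathcomp Require Import all_boot all_algebra all_fingroup.
From mathcomp.multinomials Require Import monalg.
From mathcomp Require Import zify.
Set Implicit Arguments. Unset Strict Implicit. Unset Printing Implicit Defensive.
Import GRing.Theory.
Local Open Scope ring_scope.

Inductive nctm := TAt of nat | T0 | T1 | TNat of nat | TAdd of nctm & nctm
 | TOpp of nctm | TMul of nctm & nctm.

Fixpoint nceval (env : seq ZX) (t : nctm) : ZX :=
  match t with
  | TAt n => nth 0 env n | T0 => 0 | T1 => 1 | TNat n => n%:R
  | TAdd a b => nceval env a + nceval env b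
  | TOpp a => - nceval env a
  | TMul a b => nceval env a * nceval env b end.

Fixpoint ncnorm (t : nctm) : seq (int * seq nat) :=
  match t with
  | TAt n => [:: (1%Z, [:: n])] | T0 => [::] | T1 => [:: (1%Z, [::])]
  | TNat n => [:: (Posz n, [::])]
  | TAdd a b => ncnorm a ++ ncnorm b
  | TOpp a => [seq (- p.1, p.2) | p <- ncnorm a]
  | TMul a b => [seq (p.1 * q.1, p.2 ++ q.2) | p <- ncnorm a, q <- ncnorm b] end.

Fixpoint ncins (p : int * seq nat) (l : seq (int * seq nat)) :=
  match l with
  | [::] => [:: p]
  | q :: l' => if q.2 == p.2 then (q.1 + p.1, q.2) :: l' else q :: ncins p l' end.

Definition nccomp (l : seq (int * seq nat)) := foldr ncins [::] l.

Definition ncmono (env : seq ZX) (w : seq nat) : ZX :=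
  foldr (fun i acc => nth 0 env i * acc) 1 w.
Definition ncden (env : seq ZX) (l : seq (int * seq nat)) : ZX :=
  foldr (fun p acc => ncmono env p.2 *~ p.1 + acc) 0 l.

Lemma ncden_cat (env : seq ZX) l1 l2 :
  ncden env (l1 ++ l2) = ncden env l1 + ncden env l2.
Proof. by elim: l1 => [|p l IH] /=; rewrite ?add0r // IH addrA. Qed.

Lemma ncmono_cat (env : seq ZX) w1 w2 :
  ncmono env (w1 ++ w2) = ncmono env w1 * ncmono env w2.
Proof. by elim: w1 => [|i w IH] /=; rewrite ?mul1r // IH mulrA. Qed.

Lemma ncden_opp (env : seq ZX) l :
  ncden env [seq (- p.1, p.2) | p <- l] = - ncden env l.
Proof. by elim: l => [|p l IH] /=; rewrite ?oppr0 // IH opprD mulrNz. Qed.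

Lemma ncden_mul1 (env : seq ZX) p l2 :
  ncden env [seq (p.1 * q.1, p.2 ++ q.2) | q <- l2] = (ncmono env p.2 *~ p.1) * ncden env l2.
Proof.
elim: l2 => [|q l2 IH2] /=; first by rewrite mulr0.
rewrite IH2 mulrDr; congr (_ + _).
by rewrite ncmono_cat mulrzAl mulrzAr -mulrzA mulrC.
Qed.
Lemma ncden_mul (env : seq ZX) l1 l2 :
  ncden env [seq (p.1 * q.1, p.2 ++ q.2) | p <- l1, q <- l2] = ncden env l1 * ncden env l2.
Proof.
elim: l1 => [|p l IH] /=; first by rewrite mul0r.
by rewrite ncden_cat IH mulrDl ncden_mul1.
Qed.

Lemma ncnormP (env : seq ZX) t : nceval env t = ncden env (ncnorm t).
Proof.
elim: t => [n|||n|a IHa b IHb|a IHa|a IHa b IHb] /=.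
- by rewrite mulr1 addr0.
- by [].
- by rewrite addr0.
- by rewrite addr0.
- by rewrite ncden_cat IHa IHb.
- by rewrite ncden_opp IHa.
- by rewrite ncden_mul IHa IHb.
Qed.

Lemma ncinsP (env : seq ZX) p l :
  ncden env (ncins p l) = ncmono env p.2 *~ p.1 + ncden env l.
Proof.
elim: l => [|q l IH] //=.
case: eqP => [E|_] /=.
  by rewrite mulrzDr E -addrA addrCA.
by rewrite IH addrCA.
Qed.

Lemma nccompP (env : seq ZX) l : ncden env (nccomp l) = ncden env l.
Proof. by elim: l => [|p l IH] //=; rewrite ncinsP IH. Qed.

Lemma ncden_zero (env : seq ZX) l :
  all (fun p => p.1 == 0) l -> ncden env l = 0.
Proof. by elim: l => [|p l IH] //= /andP[/eqP-> /IH->]; rewrite mulr0z addr0. Qed.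

Lemma nc_sound (env : seq ZX) a b :
  all (fun p => p.1 == 0) (nccomp (ncnorm (TAdd a (TOpp b)))) ->
  nceval env a = nceval env b.
Proof.
move=> H; apply/eqP; rewrite -subr_eq0; apply/eqP.
have := ncnormP env (TAdd a (TOpp b)); rewrite /= => ->.
by rewrite -nccompP ncden_zero.
Qed.

Ltac nc_memb x l :=
  lazymatch l with
  | nil => constr:(false)
  | (x :: _) => constr:(true)
  | (_ :: ?t) => nc_memb x t
  end.
Ltac nc_index x l :=
  lazymatch l with
  | (x :: _) => constr:(0%N)
  | (_ :: ?t) => let n := nc_index x t in constr:(S n)
  end.
Ltac nc_collect t l :=
  lazymatch t with
  | @GRing.add _ ?a ?b => let l := nc_collect a l in nc_collect b l
  | @GRing.opp _ ?a => nc_collect a l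
  | @GRing.mul _ ?a ?b => let l := nc_collect a l in nc_collect b l
  | @GRing.zero _ => l
  | @GRing.one _ => l
  | @GRing.natmul _ (@GRing.one _) ?n => l
  | @GRing.exp _ ?x 0 => l
  | @GRing.exp _ ?x (S ?n) => nc_collect x l
  | _ => let b := nc_memb t l in lazymatch b with true => l | false => constr:(t :: l) end
  end.
Ltac nc_reify t l :=
  lazymatch t with
  | @GRing.add _ ?a ?b => let ra := nc_reify a l in let rb := nc_reify b l in constr:(TAdd ra rb)
  | @GRing.opp _ ?a => let ra := nc_reify a l in constr:(TOpp ra)
  | @GRing.mul _ ?a ?b => let ra := nc_reify a l in let rb := nc_reify b l in constr:(TMul ra rb)
  | @GRing.zero _ => constr:(T0)
  | @GRing.one _ => constr:(T1)
  | @GRing.natmul _ (@GRing.one _) ?n => constr:(TNat n)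
  | @GRing.exp _ ?x 0 => constr:(T1)
  | @GRing.exp _ ?x (S ?n) => let rx := nc_reify x l in
       let rn := nc_reify (@GRing.exp _ x n) l in constr:(TMul rx rn)
  | _ => let n := nc_index t l in constr:(TAt n)
  end.
Ltac nc_ring :=
  lazymatch goal with
  | |- @eq ?R ?a ?b =>
    let l := nc_collect a (@nil R) in
    let l := nc_collect b l in
    let ra := nc_reify a l in
    let rb := nc_reify b l in
    change (nceval l ra = nceval l rb);
    apply: nc_sound; vm_compute; reflexivity
  end.

Lemma test (a b c : ZX) : comm (a * b) c = a * comm b c + comm a c * b.
Proof. rewrite /comm. nc_ring. Qed.

Definition c3 (a b c : ZX) := comm (comm a b) c.
Definition c4 (a b c d : ZX) := comm (c3 a b c) d.
Definition gen4 (a b c d : ZX) := lcomm a [:: b; c; d].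
Definition S5 (a b c d e : ZX) := comm a b * c3 c d e.
Definition Q6 (a b c d e f : ZX) := comm a b * comm c d * comm e f.
Definition W7 (a b c d e f g : ZX) := comm a b * comm c d * c3 e f g.
Definition K6 (a b c d e f : ZX) := c3 a b c * c3 d e f.

Ltac ncu := rewrite /gen4 /S5 /Q6 /W7 /K6 /c4 /c3 /lcomm /comm /=; nc_ring.

Definition ideal_ok (I : ZX -> Prop) :=
  [/\ I 0, (forall a b, I a -> I b -> I (a + b)), (forall a, I a -> I (- a)),
      (forall r a, I a -> I (r * a)) & (forall r a, I a -> I (a * r))].

Lemma T4_ok : ideal_ok T4.
Proof. split; [exact: ideal2_0 | exact: ideal2_add | exact: ideal2_opp
  | exact: ideal2_mull | move=> r a; exact: ideal2_mulr]. Qed.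

Lemma iadd (I : ZX -> Prop) : ideal_ok I -> forall a b, I a -> I b -> I (a + b).
Proof. by case. Qed.
Lemma iopp (I : ZX -> Prop) : ideal_ok I -> forall a, I a -> I (- a).
Proof. by case. Qed.
Lemma imull (I : ZX -> Prop) : ideal_ok I -> forall r a, I a -> I (r * a).
Proof. by case. Qed.
Lemma imulr (I : ZX -> Prop) : ideal_ok I -> forall r a, I a -> I (a * r).
Proof. by case. Qed.
Lemma i0 (I : ZX -> Prop) : ideal_ok I -> I 0.
Proof. by case. Qed.
Lemma isub (I : ZX -> Prop) : ideal_ok I -> forall a b, I a -> I b -> I (a - b).
Proof. by move=> HI a b Ha Hb; apply: iadd => //; apply: iopp. Qed.
Lemma imul3 (I : ZX -> Prop) : ideal_ok I -> forall u a v, I a -> I (u * a * v).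
Proof. by move=> HI u a v Ha; apply: imulr => //; apply: imull. Qed.
Lemma ieq (I : ZX -> Prop) : forall a b, a = b -> I b -> I a.
Proof. by move=> a b ->. Qed.
Lemma imuln (I : ZX -> Prop) : ideal_ok I -> forall a n, I a -> I (a *+ n).
Proof. by move=> HI a n Ha; elim: n => [|n IH]; [rewrite mulr0n; exact: i0 | rewrite mulrS; exact: iadd]. Qed.

Definition eqm (I : ZX -> Prop) x y := I (x - y).

Lemma eqm_refl (I : ZX -> Prop) : ideal_ok I -> forall x, eqm I x x.
Proof. by move=> HI x; rewrite /eqm subrr; exact: i0. Qed.
Lemma eqm_sym (I : ZX -> Prop) : ideal_ok I -> forall x y, eqm I x y -> eqm I y x.
Proof. by move=> HI x y H; rewrite /eqm -opprB; apply: iopp. Qed.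
Lemma eqm_trans (I : ZX -> Prop) : ideal_ok I -> forall x y z, eqm I x y -> eqm I y z -> eqm I x z.
Proof.
move=> HI x y z H1 H2; rewrite /eqm (_ : x - z = (x - y) + (y - z)); first exact: iadd.
by rewrite addrA subrK.
Qed.
Lemma eqm_add (I : ZX -> Prop) : ideal_ok I -> forall x y x' y', eqm I x y -> eqm I x' y' -> eqm I (x + x') (y + y').
Proof.
move=> HI x y x' y' H1 H2; rewrite /eqm (_ : x + x' - (y + y') = (x - y) + (x' - y')); first exact: iadd.
by rewrite opprD addrACA.
Qed.
Lemma eqm_opp (I : ZX -> Prop) : ideal_ok I -> forall x y, eqm I x y -> eqm I (- x) (- y).
Proof. by move=> HI x y H; rewrite /eqm -opprD; apply: iopp. Qed.
Lemma eqm_mull (I : ZX -> Prop) : ideal_ok I -> forall r x y, eqm I x y -> eqm I (r * x) (r * y).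
Proof. by move=> HI r x y H; rewrite /eqm -mulrBr; apply: imull. Qed.
Lemma eqm_mulr (I : ZX -> Prop) : ideal_ok I -> forall r x y, eqm I x y -> eqm I (x * r) (y * r).
Proof. by move=> HI r x y H; rewrite /eqm -mulrBl; apply: imulr. Qed.
Lemma eqm_eq (I : ZX -> Prop) : ideal_ok I -> forall x y, x = y -> eqm I x y.
Proof. by move=> HI x y ->; apply: eqm_refl. Qed.
Lemma eqm0 (I : ZX -> Prop) : forall x, eqm I x 0 <-> I x.
Proof. by move=> x; rewrite /eqm subr0. Qed.
Lemma eqm_lhs (I : ZX -> Prop) : forall x x' y, x = x' -> eqm I x' y -> eqm I x y.
Proof. by move=> x x' y ->. Qed.
Lemma eqm_rhs (I : ZX -> Prop) : forall x y y', y = y' -> eqm I x y' -> eqm I x y.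
Proof. by move=> x y y' ->. Qed.
Lemma eqm_swap (I : ZX -> Prop) : ideal_ok I -> forall x y, I (x + y) -> eqm I x (- y).
Proof. by move=> HI x y H; rewrite /eqm opprK. Qed.
Lemma eqm_swap' (I : ZX -> Prop) : ideal_ok I -> forall x y, I (x + y) -> eqm I y (- x).
Proof. by move=> HI x y H; rewrite /eqm opprK addrC. Qed.
Lemma eqm_I I : ideal_ok I -> forall x y, eqm I x y -> I y -> I x.
Proof. by move=> HI x y H Hy; rewrite -(subrK y x); apply: iadd. Qed.

Definition S23s a b c d e := S5 a b c d e + S5 a c b d e.
Definition S45s a b c d e := S5 a b c d e + S5 a b c e d.
Definition Q23s a b c d e f := Q6 a b c d e f + Q6 a c b d e f.
Definition Q45s a b c d e f := Q6 a b c d e f + Q6 a b c e d f.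

Ltac ncu2 := rewrite /S23s /S45s /Q23s /Q45s; ncu.
Ltac iassum := match goal with |- ?G => match goal with H : ?P |- _ => constr_eq P G; exact H end end.
Ltac imemb HI := first [ iassum | lazymatch goal with
 | |- _ (_ + _) => apply: (iadd HI); [imemb HI | imemb HI]
 | |- _ (- _) => apply: (iopp HI); imemb HI
 | |- _ (_ * _) =>
      first [apply: (imull HI); imemb HI | apply: (imulr HI); imemb HI]
 | |- _ 0 => exact: (i0 HI)
 end ].


Lemma K_of (I : ZX -> Prop) (HI : ideal_ok I) (a b c d e f : ZX) :
  I (S23s (a*b) c d e f) -> I (S23s (b*a) c d e f) -> I (S23s d (a*b) e c f) ->
  I (S23s d (b*a) e c f) -> I (c4 a b c f) -> I (K6 a b c d e f).
Proof.
move=> *.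
have -> : K6 a b c d e f = S23s (a*b) c d e f - S23s (b*a) c d e f - S23s d (a*b) e c f
   + S23s d (b*a) e c f + comm d e * c4 a b c f by ncu2.
imemb HI.
Qed.

Definition Aperm (I : ZX -> Prop) n (f : ('I_n -> nat) -> ZX) (s : 'S_n) :=
  forall i, I (f i - sgn s * f (i \o s)).

Lemma Aperm_mul (I : ZX -> Prop) n (f : ('I_n -> nat) -> ZX) s1 s2 :
  ideal_ok I -> (forall i j, i =1 j -> f i = f j) ->
  Aperm I f s1 -> Aperm I f s2 -> Aperm I f (s1 * s2)%g.
Proof.
move=> HI fe H1 H2 i.
have E : f (i \o (s1 * s2)%g) = f ((i \o s2) \o s1) by apply: fe => x /=; rewrite permM.
rewrite E.
have Es : sgn (s1 * s2)%g = sgn s1 * sgn s2.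
  rewrite /sgn odd_permM; exact: (@signr_addb ZX).
rewrite Es.
have -> : f i - sgn s1 * sgn s2 * f (i \o s2 \o s1) =
   (f i - sgn s2 * f (i \o s2)) + sgn s2 * (f (i \o s2) - sgn s1 * f (i \o s2 \o s1)).
  have sg : forall s : 'S_n, sgn s = 1 \/ sgn s = -1.
    by move=> s; rewrite /sgn; case: (odd_perm s); [right|left].
  by case: (sg s1) => ->; case: (sg s2) => ->; nc_ring.
apply: (iadd HI); [exact: H2 | apply: (imull HI); exact: H1].
Qed.
Lemma Aperm1 (I : ZX -> Prop) n (f : ('I_n -> nat) -> ZX) :
  ideal_ok I -> (forall i j, i =1 j -> f i = f j) -> Aperm I f 1%g.
Proof.
move=> HI fe i; have -> : sgn (1%g : 'S_n) = 1 by rewrite /sgn odd_perm1.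
rewrite mul1r.
rewrite (fe (i \o (1%g : 'S_n)) i); first by rewrite subrr; exact: (i0 HI).
by move=> x /=; rewrite perm1.
Qed.

Lemma Aperm_adj (I : ZX -> Prop) n (f : ('I_n -> nat) -> ZX) (x y : 'I_n) :
  x != y -> (forall i, I (f i + f (i \o tperm x y))) -> Aperm I f (tperm x y).
Proof.
move=> nxy H i; have -> : sgn (tperm x y) = -1 by rewrite /sgn odd_tperm nxy.
rewrite mulN1r opprK; exact: H.
Qed.

Lemma Aperm_all (I : ZX -> Prop) n (f : ('I_n -> nat) -> ZX) :
  ideal_ok I -> (forall i j, i =1 j -> f i = f j) ->
  (forall (x y : 'I_n), val y = (val x).+1 -> forall i, I (f i + f (i \o tperm x y))) ->
  forall s, Aperm I f s.
Proof.
move=> HI fe Hadj.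
have Htp : forall d (x y : 'I_n), val y = (val x + d)%N -> Aperm I f (tperm x y).
  elim=> [|d IH] x y Hy.
    have -> : y = x by apply: val_inj; rewrite Hy addn0.
    by rewrite tperm1; exact: (Aperm1 HI fe).
  have ltn : (x + d < n)%N by move: (ltn_ord y); rewrite Hy addnS => /ltnW.
  pose y' := Ordinal ltn.
  have Hyy : val y = (val y').+1 by rewrite Hy /= addnS.
  case: (eqVneq x y') => [exy'|nxy'].
    apply: Aperm_adj; last by apply: Hadj; rewrite Hyy -exy'.
    by rewrite -val_eqE Hyy -exy' (ltn_eqF (ltnSn _)).
  have E : tperm x y = (tperm y' y * (tperm x y' * tperm y' y))%g.
    have H1 : y' != x by rewrite eq_sym.
    have H2 : y != x by rewrite -val_eqE Hyy /= eq_sym (ltn_eqF _) // ltnS leq_addr.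
    have := tpermJ x y' (tperm y' y).
    rewrite /conjg tpermV (tpermD H1 H2) tpermL.
    by move=> <-.
  rewrite E; apply: (Aperm_mul HI fe).
    apply: Aperm_adj; last exact: Hadj.
    by rewrite -val_eqE Hyy (ltn_eqF (ltnSn _)).
  apply: (Aperm_mul HI fe); last first.
    apply: Aperm_adj; last exact: Hadj.
    by rewrite -val_eqE Hyy (ltn_eqF (ltnSn _)).
  by apply: IH.
move=> s; case: (prod_tpermP s) => ts -> _.
elim: ts => [|t ts IH]; first by rewrite big_nil; exact: (Aperm1 HI fe).
rewrite big_cons; apply: (Aperm_mul HI fe); last exact: IH.
case: t => x y /=.
case: (leqP x y) => [le|lt].
  by apply: (Htp (y - x)%N); rewrite subnKC.
rewrite tpermC; apply: (Htp (x - y)%N); by rewrite (subnKC (ltnW lt)).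
Qed.

Lemma tperm_inord n (x y : 'I_n.+1) k : (k < n.+1)%N ->
  tperm x y (inord k) = inord (if k == (x : nat) then (y : nat) else if k == (y : nat) then (x : nat) else k).
Proof.
move=> Hk; apply: val_inj.
have vk : val (inord k : 'I_n.+1) = k := inordK Hk.
rewrite [in RHS]/= inordK; last first.
  by case: ifP => _; [|case: ifP => _]; rewrite ?ltn_ord.
case: tpermP => [E|E|E1 E2].
- by rewrite -vk E eqxx.
- rewrite -vk E eqxx; case: ifP => // /eqP -> //.
- have h1 : (k == val x) = false by apply/negP => /eqP h; apply: E1; apply: val_inj; rewrite vk.
  have h2 : (k == val y) = false by apply/negP => /eqP h; apply: E2; apply: val_inj; rewrite vk.
  by rewrite h1 h2.
Qed.

Lemma p23E (i : 'I_5 -> nat) : p23 i = S5 (xv (i (inord 0))) (xv (i (inord 1)))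
  (xv (i (inord 2))) (xv (i (inord 3))) (xv (i (inord 4))).
Proof. by []. Qed.

Lemma p222E (i : 'I_6 -> nat) : p222 i = Q6 (xv (i (inord 0))) (xv (i (inord 1)))
  (xv (i (inord 2))) (xv (i (inord 3))) (xv (i (inord 4))) (xv (i (inord 5))).
Proof. by []. Qed.

Lemma p33E (i : 'I_6 -> nat) : p33 i = K6 (xv (i (inord 0))) (xv (i (inord 1)))
  (xv (i (inord 2))) (xv (i (inord 3))) (xv (i (inord 4))) (xv (i (inord 5))).
Proof. by []. Qed.

Lemma T4_term (u v a b c d : ZX) : T4 (u * gen4 a b c d * v).
Proof. apply: ideal2_mulr; apply: ideal2_mull; apply: ideal2_gen; by exists a, b, c, d. Qed.

Ltac t4memb := repeat first [ apply: ideal2_add | apply: ideal2_opp | apply: T4_term ].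

Lemma S23_T4 (a b c d e : ZX) : T4 (S5 a b c d e + S5 a c b d e).
Proof.
have -> : S5 a b c d e + S5 a c b d e = (1 * gen4 (a) (b) (c) (d) * (e)) + - (1 * gen4 (a) (b) (c * e) (d) * 1) + (1 * gen4 (a) (b) (c) (e) * (d)) + - (1 * gen4 (a) (b) (d * c) (e) * 1) + - (1 * gen4 (a) (b) (e) (c) * (d)) + (1 * gen4 (a) (b) (e) (d * c) * 1) + (1 * gen4 (a) (c * b) (d) (e) * 1) + (1 * gen4 (a) (c) (b) (e * d) * 1) + - (1 * gen4 (a) (c) (b * e) (d) * 1) + - (1 * gen4 (a) (c) (d * b) (e) * 1) + - (1 * gen4 (a) (c) (e) (b) * (d)) + (1 * gen4 (a) (c) (e) (d * b) * 1) by ncu.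
t4memb.
Qed.

Lemma S45_T4 (a b c d e : ZX) : T4 (S5 a b c d e + S5 a b c e d).
Proof.
have -> : S5 a b c d e + S5 a b c e d = (1 * gen4 (a) (b * c) (d) (e) * 1) + (1 * gen4 (a) (b * c) (d) (e) * 1) + (1 * gen4 (a) (b * c) (d) (e) * 1) + (1 * gen4 (a) (b * c) (d) (e) * 1) + - (1 * gen4 (a * b) (c) (d) (e) * 1) + - (1 * gen4 (a) (b) (c) (d) * (e)) + - (1 * gen4 (a) (b) (c) (d) * (e)) + (1 * gen4 (a) (b) (c) (e * d) * 1) + (1 * gen4 (a) (b) (c) (e * d) * 1) + (1 * gen4 (a) (b) (c) (e * d) * 1) + (1 * gen4 (a) (b) (c) (e * d) * 1) + - (1 * gen4 (a) (b) (c * e) (d) * 1) + (1 * gen4 (a * b) (c) (e) (d) * 1) + - (1 * gen4 (a) (b) (c) (e) * (d)) + - (1 * gen4 (a) (b) (c) (e) * (d)) + - ((a) * gen4 (b) (c) (e) (d) * 1) + - (1 * gen4 (a) (b) (d * c) (e) * 1) + - (1 * gen4 (a) (b) (d * c) (e) * 1) + - (1 * gen4 (a) (b) (d * c) (e) * 1) + (1 * gen4 (a) (b * d) (c) (e) * 1) + (1 * gen4 (a * b) (d) (c) (e) * 1) + - (1 * gen4 (a) (b) (d) (c) * (e)) + (1 * gen4 (a * b) (d) (e) (c) * 1) + - (1 * gen4 (a) (b * e) (c) (d) * 1) + (1 * gen4 (a * b) (e) (c) (d) * 1) + - (1 * gen4 (a) (b) (e) (c) * (d)) + - ((a) * gen4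 (b) (e) (c) (d) * 1) + (1 * gen4 (a) (b) (e) (d * c) * 1) + (1 * gen4 (a) (b * e) (d) (c) * 1) + - (1 * gen4 (a * b) (e) (d) (c) * 1) + - (1 * gen4 (a) (c * b) (d) (e) * 1) + (1 * gen4 (a) (c) (b) (d) * (e)) + - (1 * gen4 (a) (c) (b) (e * d) * 1) + - (1 * gen4 (a) (c) (b) (e * d) * 1) + - (1 * gen4 (a) (c) (d * b) (e) * 1) + - (1 * gen4 (a) (c) (d * b) (e) * 1) + (1 * gen4 (a) (c * d) (b) (e) * 1) + (1 * gen4 (a) (c * d) (b) (e) * 1) + (1 * gen4 (a) (c * d) (b) (e) * 1) + (1 * gen4 (a) (c * d) (b) (e) * 1) + - (1 * gen4 (a * c) (d) (b) (e) * 1) + - (1 * gen4 (a) (c) (d) (b) * (e)) + (1 * gen4 (a) (c) (d * e) (b) * 1) + - (1 * gen4 (a) (c * d) (e) (b) * 1) + - (1 * gen4 (a) (c) (e) (b * d) * 1) + (1 * gen4 (a) (c * e) (b) (d) * 1) + (1 * gen4 (a) (c) (e) (b) * (d)) + - (1 * gen4 (a) (d) (b * c) (e) * 1) + - (1 * gen4 (a) (d) (b * c) (e) * 1) + (1 * gen4 (a) (d) (b) (c) * (e)) + - (1 * gen4 (a) (d) (b) (e * c) * 1) + - (1 * gen4 (a) (d) (b) (e * c) * 1) + (1 * gen4 (a) (d) (b * e) (c) * 1) + (1 * gen4 (a) (d) (c) (b * e) * 1) + (1 * gen4 (a) (d) (c * b) (e) * 1) + - (1 * gen4 (a) (d) (c)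 (e * b) * 1) + - (1 * gen4 (a) (d) (c) (e * b) * 1) + (1 * gen4 (a) (d) (c * e) (b) * 1) + - (1 * gen4 (a) (d) (e) (b * c) * 1) + (1 * gen4 (a * d) (e) (b) (c) * 1) + (1 * gen4 (a) (d) (e) (b) * (c)) + (1 * gen4 (a) (d) (e) (b) * (c)) + - (1 * gen4 (a) (d) (e) (c * b) * 1) + - (1 * gen4 (a) (e) (b) (c * d) * 1) + - (1 * gen4 (a) (e) (b * c) (d) * 1) + (1 * gen4 (a) (e) (c * b) (d) * 1) by ncu.
t4memb.
Qed.

Lemma c4_T4 (a b c d : ZX) : T4 (c4 a b c d).
Proof. apply: ideal2_gen; by exists a, b, c, d. Qed.

Lemma K_T4 (a b c d e f : ZX) : T4 (K6 a b c d e f).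
Proof.
apply: (K_of T4_ok); rewrite /S23s; (apply: S23_T4 || apply: c4_T4).
Qed.

Lemma Q46_T4 (a b e c f d : ZX) : T4 (Q6 a b e c f d + Q6 a b e d f c).
Proof.
have h1 := S23_T4 b a (e*f) c d.
have h2 := S23_T4 b a f c d.
have h3 := S23_T4 b a e c d.
have h4 := K_T4 a b e f c d.
have h5 := c4_T4 a c d f.
have -> : Q6 a b e c f d + Q6 a b e d f c =
  - (S5 b a (e*f) c d + S5 b (e*f) a c d) + e * (S5 b a f c d + S5 b f a c d)
  + (S5 b a e c d + S5 b e a c d) * f - K6 a b e f c d + comm e b * c4 a c d f by ncu.
imemb T4_ok.
Qed.

Lemma Qrot_T4 (a b c d e f : ZX) : T4 (Q6 a b c d e f - Q6 c d e f a b).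
Proof.
have h1 := c4_T4 a b c d. have h2 := c4_T4 a b d c.
have h3 := c4_T4 a b e f. have h4 := c4_T4 a b f e.
have -> : Q6 a b c d e f - Q6 c d e f a b =
  (c4 a b c d - c4 a b d c) * comm e f + comm c d * (c4 a b e f - c4 a b f e) by ncu.
imemb T4_ok.
Qed.

Lemma Q45_T4 (a b c d e f : ZX) : T4 (Q6 a b c d e f + Q6 a b c e d f).
Proof.
have h := Q46_T4 a b c e f d.
have -> : Q6 a b c d e f + Q6 a b c e d f = - (Q6 a b c e f d + Q6 a b c d f e) by ncu.
imemb T4_ok.
Qed.

Lemma Q23_T4 (a b c d e f : ZX) : T4 (Q6 a b c d e f + Q6 a c b d e f).
Proof.
have h1 := Q45_T4 e f a b c d.
have h2 := Qrot_T4 a b c d e f. have h3 := Qrot_T4 c d e f a b.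
have h4 := Qrot_T4 a c b d e f. have h5 := Qrot_T4 b d e f a c.
have -> : Q6 a b c d e f + Q6 a c b d e f = (Q6 e f a b c d + Q6 e f a c b d)
  + (Q6 a b c d e f - Q6 c d e f a b) + (Q6 c d e f a b - Q6 e f a b c d)
  + (Q6 a c b d e f - Q6 b d e f a c) + (Q6 b d e f a c - Q6 e f a c b d) by ncu.
imemb T4_ok.
Qed.

Lemma p23_adj (I : ZX -> Prop) : ideal_ok I ->
  (forall a b c d e, I (S5 a b c d e + S5 a c b d e)) ->
  (forall a b c d e, I (S5 a b c d e + S5 a b c e d)) ->
  forall (x y : 'I_5), val y = (val x).+1 -> forall i, I (p23 i + p23 (i \o tperm x y)).
Proof.
move=> HI H23 H45 [x Hx] [y Hy'] /= Hy i; subst y.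
rewrite !p23E /= !tperm_inord //=.
move: Hy'.
case: x Hx => [|[|[|[|n]]]] _ Hn /=.
- have -> : forall a b c d e, S5 a b c d e + S5 b a c d e = 0 by move=> *; ncu.
  exact: (i0 HI).
- exact: H23.
- have -> : forall a b c d e, S5 a b c d e + S5 a b d c e = 0 by move=> *; ncu.
  exact: (i0 HI).
- exact: H45.
- by [].
Qed.

Lemma p222_adj (I : ZX -> Prop) : ideal_ok I ->
  (forall a b c d e f, I (Q6 a b c d e f + Q6 a c b d e f)) ->
  (forall a b c d e f, I (Q6 a b c d e f + Q6 a b c e d f)) ->
  forall (x y : 'I_6), val y = (val x).+1 -> forall i, I (p222 i + p222 (i \o tperm x y)).
Proof.
move=> HI H23 H45 [x Hx] [y Hy'] /= Hy i; subst y.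
rewrite !p222E /= !tperm_inord //=.
move: Hy'.
case: x Hx => [|[|[|[|[|n]]]]] _ Hn /=.
- have -> : forall a b c d e f, Q6 a b c d e f + Q6 b a c d e f = 0 by move=> *; ncu.
  exact: (i0 HI).
- exact: H23.
- have -> : forall a b c d e f, Q6 a b c d e f + Q6 a b d c e f = 0 by move=> *; ncu.
  exact: (i0 HI).
- exact: H45.
- have -> : forall a b c d e f, Q6 a b c d e f + Q6 a b c d f e = 0 by move=> *; ncu.
  exact: (i0 HI).
- by [].
Qed.

Lemma lcomm_T4 (g : ZX) s : T4 g -> T4 (lcomm g s).
Proof.
elim: s g => [|x s IH] g Hg //=.
apply: IH; rewrite /comm; apply: ideal2_add; [apply: ideal2_mulr | apply: ideal2_opp; apply: ideal2_mull]; exact: Hg.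
Qed.

Lemma Gens_T4 f : Gens f -> T4 f.
Proof.
case=> [[i1 [s [Hs ->]]]|[[i ->]|[[i [s ->]]|[i [s ->]]]]].
- case: s Hs => [|x1 [|x2 [|x3 s]]] //= _.
  apply: lcomm_T4; exact: c4_T4.
- rewrite p33E; exact: K_T4.
- apply: (Aperm_all T4_ok) => [j k E|x y Hy j].
    by rewrite !p23E !E.
  apply: (p23_adj T4_ok) => //; [exact: S23_T4 | exact: S45_T4].
- apply: (Aperm_all T4_ok) => [j k E|x y Hy j].
    by rewrite !p222E !E.
  apply: (p222_adj T4_ok) => //; [exact: Q23_T4 | exact: Q45_T4].
Qed.

Definition mon (s : seq nat) : ZX := foldr (fun i acc => xv i * acc) 1 s.

Lemma monM s t : mon (s ++ t) = mon s * mon t.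
Proof. by elim: s => [|i s IH] /=; rewrite ?mul1r // IH mulrA. Qed.

Lemma malgUU (k1 k2 : {fmonom nat}) : (<< k1 >> : ZX) * << k2 >> = << mmul k1 k2 >>.
Proof. by rewrite malgM_def fgmulUU mulr1. Qed.

Lemma malg_mon (s : seq nat) : (<< FMonom s >> : ZX) = mon s.
Proof.
elim: s => [|i s IH] /=.
  by rewrite -fmoneE.
rewrite -IH /xv malgUU; congr (<< _ >>).
by apply/eqP; rewrite fmP fmM fmU.
Qed.

Lemma P_mulz (P : ZX -> Prop) : P 0 -> (forall x y, P x -> P y -> P (x + y)) ->
  (forall x, P x -> P (- x)) -> forall x (c : int), P x -> P (x *~ c).
Proof.
move=> P0 Pa Po x c Px.
have Pn : forall n, P (x *+ n).
  by elim=> [|n IH]; [rewrite mulr0n | rewrite mulrS; apply: Pa].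
case: c => n; first exact: Pn.
by rewrite NegzE mulrNz; apply: Po; exact: Pn.
Qed.

Lemma ZX_ind (P : ZX -> Prop) : P 0 -> (forall x y, P x -> P y -> P (x + y)) ->
  (forall x, P x -> P (- x)) -> (forall s, P (mon s)) -> forall x, P x.
Proof.
move=> P0 Pa Po Pm x.
rewrite (monalgE x).
apply: (big_ind P) => // k _.
have -> : << x@_k *g k >> = (<< k >> : ZX) *~ x@_k.
  by rewrite -[x@_k in LHS]intz -raddfMz.
apply: P_mulz => //.
by rewrite -(fmK k) malg_mon.
Qed.

Notation L := (lideal Gens).

Lemma S23_L a b c d e : L (S5 (xv a) (xv b) (xv c) (xv d) (xv e) + S5 (xv a) (xv c) (xv b) (xv d) (xv e)).
Proof.
pose i := fun k : 'I_5 => nth 0%N [:: a; b; c; d; e] k.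
have H : Gens (p23 i - sgn (tperm (inord 1 : 'I_5) (inord 2)) * p23 (i \o tperm (inord 1) (inord 2))).
  by right; right; left; exists i, (tperm (inord 1) (inord 2)).
have E : sgn (tperm (inord 1 : 'I_5) (inord 2)) = -1.
  by rewrite /sgn odd_tperm -val_eqE /= !inordK.
have iK : forall k, (k < 5)%N -> nat_of_ord (inord k : 'I_5) = k by move=> k h; rewrite inordK.
have [k0 [k1 [k2 [k3 k4]]]] := (iK 0%N isT, (iK 1%N isT, (iK 2%N isT, (iK 3%N isT, iK 4%N isT)))).
move: H; rewrite E mulN1r opprK !p23E /= !tperm_inord // /i /= ?k0 ?k1 ?k2 ?k3 ?k4 /= ?k0 ?k1 ?k2 ?k3 ?k4 /=.
by move=> H; apply: lideal_gen.
Qed.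

Lemma S45_L a b c d e : L (S5 (xv a) (xv b) (xv c) (xv d) (xv e) + S5 (xv a) (xv b) (xv c) (xv e) (xv d)).
Proof.
pose i := fun k : 'I_5 => nth 0%N [:: a; b; c; d; e] k.
have H : Gens (p23 i - sgn (tperm (inord 3 : 'I_5) (inord 4)) * p23 (i \o tperm (inord 3) (inord 4))).
  by right; right; left; exists i, (tperm (inord 3) (inord 4)).
have E : sgn (tperm (inord 3 : 'I_5) (inord 4)) = -1.
  by rewrite /sgn odd_tperm -val_eqE /= !inordK.
have iK : forall k, (k < 5)%N -> nat_of_ord (inord k : 'I_5) = k by move=> k h; rewrite inordK.
have [k0 [k1 [k2 [k3 k4]]]] := (iK 0%N isT, (iK 1%N isT, (iK 2%N isT, (iK 3%N isT, iK 4%N isT)))).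
move: H; rewrite E mulN1r opprK !p23E /= !tperm_inord // /i /= ?k0 ?k1 ?k2 ?k3 ?k4 /= ?k0 ?k1 ?k2 ?k3 ?k4 /=.
by move=> H; apply: lideal_gen.
Qed.

Lemma Q23_L a b c d e f : L (Q6 (xv a) (xv b) (xv c) (xv d) (xv e) (xv f) + Q6 (xv a) (xv c) (xv b) (xv d) (xv e) (xv f)).
Proof.
pose i := fun k : 'I_6 => nth 0%N [:: a; b; c; d; e; f] k.
have H : Gens (p222 i - sgn (tperm (inord 1 : 'I_6) (inord 2)) * p222 (i \o tperm (inord 1) (inord 2))).
  by right; right; right; exists i, (tperm (inord 1) (inord 2)).
have E : sgn (tperm (inord 1 : 'I_6) (inord 2)) = -1.
  by rewrite /sgn odd_tperm -val_eqE /= !inordK.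
have iK : forall k, (k < 6)%N -> nat_of_ord (inord k : 'I_6) = k by move=> k h; rewrite inordK.
have [k0 [k1 [k2 [k3 [k4 k5]]]]] := (iK 0%N isT, (iK 1%N isT, (iK 2%N isT, (iK 3%N isT, (iK 4%N isT, iK 5%N isT))))).
move: H; rewrite E mulN1r opprK !p222E /= !tperm_inord // /i /= ?k0 ?k1 ?k2 ?k3 ?k4 ?k5 /= ?k0 ?k1 ?k2 ?k3 ?k4 ?k5 /=.
by move=> H; apply: lideal_gen.
Qed.

Lemma Q45_L a b c d e f : L (Q6 (xv a) (xv b) (xv c) (xv d) (xv e) (xv f) + Q6 (xv a) (xv b) (xv c) (xv e) (xv d) (xv f)).
Proof.
pose i := fun k : 'I_6 => nth 0%N [:: a; b; c; d; e; f] k.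
have H : Gens (p222 i - sgn (tperm (inord 3 : 'I_6) (inord 4)) * p222 (i \o tperm (inord 3) (inord 4))).
  by right; right; right; exists i, (tperm (inord 3) (inord 4)).
have E : sgn (tperm (inord 3 : 'I_6) (inord 4)) = -1.
  by rewrite /sgn odd_tperm -val_eqE /= !inordK.
have iK : forall k, (k < 6)%N -> nat_of_ord (inord k : 'I_6) = k by move=> k h; rewrite inordK.
have [k0 [k1 [k2 [k3 [k4 k5]]]]] := (iK 0%N isT, (iK 1%N isT, (iK 2%N isT, (iK 3%N isT, (iK 4%N isT, iK 5%N isT))))).
move: H; rewrite E mulN1r opprK !p222E /= !tperm_inord // /i /= ?k0 ?k1 ?k2 ?k3 ?k4 ?k5 /= ?k0 ?k1 ?k2 ?k3 ?k4 ?k5 /=.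
by move=> H; apply: lideal_gen.
Qed.

Lemma K_L a b c d e f : L (K6 (xv a) (xv b) (xv c) (xv d) (xv e) (xv f)).
Proof.
pose i := fun k : 'I_6 => nth 0%N [:: a; b; c; d; e; f] k.
have H : Gens (p33 i) by right; left; exists i.
have iK : forall k, (k < 6)%N -> nat_of_ord (inord k : 'I_6) = k by move=> k h; rewrite inordK.
have [k0 [k1 [k2 [k3 [k4 k5]]]]] := (iK 0%N isT, (iK 1%N isT, (iK 2%N isT, (iK 3%N isT, (iK 4%N isT, iK 5%N isT))))).
move: H; rewrite p33E /i /= ?k0 ?k1 ?k2 ?k3 ?k4 ?k5.
by move=> H; apply: lideal_gen.
Qed.

Definition isLC (g : ZX) := exists i1 s, (3 <= size s)%N /\ g = lcomm (xv i1) (map xv s).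

Lemma LC_L g : isLC g -> L g.
Proof. by move=> H; apply: lideal_gen; left. Qed.

Lemma LC_comm g j : isLC g -> isLC (comm g (xv j)).
Proof.
case=> i1 [s [Hs ->]]; exists i1, (rcons s j); split; first by rewrite size_rcons ltnW.
by rewrite map_rcons /lcomm -cats1 foldl_cat.
Qed.

Lemma LC_word w : forall g, isLC g -> L (g * mon w).
Proof.
elim: w => [|j w IH] g Hg /=; first by rewrite mulr1; exact: LC_L.
have -> : g * (xv j * mon w) = xv j * (g * mon w) + comm g (xv j) * mon w.
  by rewrite /comm mulrBl !mulrA addrC subrK.
apply: lideal_add; first by apply: lideal_mull; exact: IH.
by apply: IH; exact: LC_comm.
Qed.

Lemma LC_right g r : isLC g -> L (g * r).
Proof.
move=> Hg; elim/ZX_ind: r.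
- by rewrite mulr0; exact: lideal_0.
- by move=> x y Hx Hy; rewrite mulrDr; exact: lideal_add.
- by move=> x Hx; rewrite mulrN; exact: lideal_opp.
- by move=> s; exact: LC_word.
Qed.

Ltac LCt := lazymatch goal with |- isLC (lcomm (xv ?a) (map xv ?s)) =>
  exists a, s; split; [by [] | by []] end.
Ltac lmemb := first [ iassum | lazymatch goal with
 | |- lideal _ (_ + _) => apply: lideal_add; [lmemb|lmemb]
 | |- lideal _ (- _) => apply: lideal_opp; lmemb
 | |- lideal _ (lcomm _ _) => apply: LC_L; LCt
 | |- lideal _ (_ * _) => first [ apply: LC_right; LCt | apply: lideal_mull; lmemb ]
 | |- lideal _ 0 => exact: lideal_0 end ].
Ltac ncu3 := rewrite /mon; ncu2.

Lemma comm_K6_L a b c d e f x : L (comm (K6 (xv a) (xv b) (xv c) (xv d) (xv e) (xv f)) (xv x)).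
Proof.
have h1 := K_L a b c d e f.
have -> : comm (K6 (xv a) (xv b) (xv c) (xv d) (xv e) (xv f)) (xv x) =
   (lcomm (xv a) (map xv [:: b; c; x])) * c3 (xv d) (xv e) (xv f) + c3 (xv a) (xv b) (xv c) * (lcomm (xv d) (map xv [:: e; f; x])) by ncu3.
lmemb.
Qed.

Lemma comm_S5_L a b c d e x : L (comm (S5 (xv a) (xv b) (xv c) (xv d) (xv e)) (xv x)).
Proof.
have h1 := K_L a b x c d e.
have -> : comm (S5 (xv a) (xv b) (xv c) (xv d) (xv e)) (xv x) =
   K6 (xv a) (xv b) (xv x) (xv c) (xv d) (xv e) + (lcomm (xv c) (map xv [:: d; e; x])) * comm (xv a) (xv b) - (lcomm (xv c) (map xv [:: d; e; x; a; b])) + (lcomm (xv c) (map xv [:: d; e; x; b; a])) by ncu3.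
lmemb.
Qed.

Lemma comm_Q6_L a b c d e f x : L (comm (Q6 (xv a) (xv b) (xv c) (xv d) (xv e) (xv f)) (xv x)).
Proof.
have ? := S23_L e f a b x.
have ? := S23_L a e b f x.
have ? := S23_L e f c d x.
have ? := S23_L c e d f x.
have ? := S45_L c d f x e.
have ? := S45_L c d e x f.
have -> : comm (Q6 (xv a) (xv b) (xv c) (xv d) (xv e) (xv f)) (xv x) =
   (lcomm (xv a) (map xv [:: b; x; c; d])) * comm (xv e) (xv f) - (lcomm (xv a) (map xv [:: b; x; d; c])) * comm (xv e) (xv f) + comm (xv c) (xv d) * ((lcomm (xv a) (map xv [:: b; x; e; f])) - (lcomm (xv a) (map xv [:: b; x; f; e]))) + comm (xv a) (xv b) * ((lcomm (xv c) (map xv [:: d; x; e; f])) - (lcomm (xv c) (map xv [:: d; x; f; e]))) + comm (xv c) (xv d) * ((S5 (xv e) (xv f) (xv a) (xv b) (xv x) + S5 (xv e) (xv a) (xv f) (xv b) (xv x)) - (S5 (xv a) (xv e) (xv b) (xv f) (xv x) + S5 (xv a) (xv b) (xv e) (xv f) (xv x))) + (lcomm (xv c) (map xv [:: d; a; b])) * c3 (xv e) (xv f) (xv x) - (lcomm (xv c) (map xv [:: d; b; a])) * c3 (xv e) (xv f) (xv x) + comm (xv a) (xv b) * ((S5 (xv e) (xv f) (xv c) (xv d) (xv x) + S5 (xv e) (xv c) (xv f) (xv d) (xv x)) - (S5 (xv c) (xv e) (xv d) (xv f) (xv x) + S5 (xv c) (xv d) (xv e) (xv f) (xv x))) + - (comm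 (xv a) (xv b) * ((S5 (xv c) (xv d) (xv f) (xv x) (xv e) + S5 (xv c) (xv d) (xv f) (xv e) (xv x)))) + - (comm (xv a) (xv b) * (- (S5 (xv c) (xv d) (xv e) (xv x) (xv f) + S5 (xv c) (xv d) (xv e) (xv f) (xv x)))) by ncu3.
lmemb.
Qed.

Lemma sgn_pm n (s : 'S_n) : sgn s = 1 \/ sgn s = -1.
Proof. by rewrite /sgn; case: (odd_perm s); [right|left]. Qed.

Lemma right_diff (A B s x : ZX) : (s = 1 \/ s = -1) ->
  (A - s * B) * x = x * (A - s * B) + comm A x - s * comm B x.
Proof. by case=> ->; rewrite /comm; nc_ring. Qed.


Lemma Gens_right f j : Gens f -> L (f * xv j).
Proof.
move=> Hf.
have Lf : L f by apply: lideal_gen.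
have E : f * xv j = xv j * f + comm f (xv j) by rewrite /comm addrC subrK.
case: Hf => [[i1 [s [Hs Ef]]]|[[i Ef]|[[i [s Ef]]|[i [s Ef]]]]].
- by apply: LC_right; exists i1, s; split.
- rewrite E; apply: lideal_add; first by apply: lideal_mull.
  by rewrite Ef p33E; exact: comm_K6_L.
- have h1 : L (xv j * (p23 i - sgn s * p23 (i \o s))) by rewrite -Ef; apply: lideal_mull.
  have h2 : L (comm (p23 i) (xv j)) by rewrite p23E; exact: comm_S5_L.
  have h3 : L (comm (p23 (i \o s)) (xv j)) by rewrite p23E; exact: comm_S5_L.
  rewrite Ef right_diff; last exact: sgn_pm.
  lmemb.
- have h1 : L (xv j * (p222 i - sgn s * p222 (i \o s))) by rewrite -Ef; apply: lideal_mull.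
  have h2 : L (comm (p222 i) (xv j)) by rewrite p222E; exact: comm_Q6_L.
  have h3 : L (comm (p222 (i \o s)) (xv j)) by rewrite p222E; exact: comm_Q6_L.
  rewrite Ef right_diff; last exact: sgn_pm.
  lmemb.
Qed.

Lemma L_right_letter a j : L a -> L (a * xv j).
Proof.
elim=> [f Hf||b c _ Hb _ Hc|b _ Hb|r b _ Hb].
- exact: Gens_right.
- by rewrite mul0r; exact: lideal_0.
- by rewrite mulrDl; exact: lideal_add.
- by rewrite mulNr; exact: lideal_opp.
- by rewrite -mulrA; apply: lideal_mull.
Qed.

Lemma L_right a r : L a -> L (a * r).
Proof.
move=> Ha; elim/ZX_ind: r.
- by rewrite mulr0; exact: lideal_0.
- by move=> x y Hx Hy; rewrite mulrDr; exact: lideal_add.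
- by move=> x Hx; rewrite mulrN; exact: lideal_opp.
- move=> s; elim: s a Ha => [|j s IH] a Ha /=; first by rewrite mulr1.
  by rewrite mulrA; apply: IH; exact: L_right_letter.
Qed.

Lemma L_ok : ideal_ok L.
Proof.
split; [exact: lideal_0 | exact: lideal_add | exact: lideal_opp | exact: lideal_mull |].
by move=> r a Ha; exact: L_right.
Qed.

Set Implicit Arguments.

Definition wd := (nat * seq nat)%type.
Definition Mw (p : wd) : ZX := xv p.1 * mon p.2.
Definition sz (p : wd) : nat := (size p.2).+1.
Definition wcat (p q : wd) : wd := (p.1, p.2 ++ q.1 :: q.2).

Lemma Mw_wcat p q : Mw (wcat p q) = Mw p * Mw q.
Proof. rewrite /Mw /wcat /= monM; rewrite [mon (_ :: _)]/mon /= -/(mon _) !mulrA. by []. Qed.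
Lemma sz_wcat p q : sz (wcat p q) = (sz p + sz q)%N.
Proof. rewrite /sz /= size_cat /=; lia. Qed.

Definition W7' := W7.
Definition PC (I : ZX -> Prop) m := forall a b c d : wd,
  (sz a + sz b + sz c + sz d <= m)%N -> I (c4 (Mw a) (Mw b) (Mw c) (Mw d)).
Definition PK (I : ZX -> Prop) m := forall a b c d e f : wd,
  (sz a + sz b + sz c + sz d + sz e + sz f <= m)%N -> I (K6 (Mw a) (Mw b) (Mw c) (Mw d) (Mw e) (Mw f)).
Definition PS (I : ZX -> Prop) m := forall a b c d e : wd,
  (sz a + sz b + sz c + sz d + sz e <= m)%N ->
  I (S23s (Mw a) (Mw b) (Mw c) (Mw d) (Mw e)) /\ I (S45s (Mw a) (Mw b) (Mw c) (Mw d) (Mw e)).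
Definition PQ (I : ZX -> Prop) m := forall a b c d e f : wd,
  (sz a + sz b + sz c + sz d + sz e + sz f <= m)%N ->
  I (Q23s (Mw a) (Mw b) (Mw c) (Mw d) (Mw e) (Mw f)) /\ I (Q45s (Mw a) (Mw b) (Mw c) (Mw d) (Mw e) (Mw f)).

Ltac bnd := repeat match goal with H : is_true (_ <= _)%N |- _ => move: H end;
  rewrite ?sz_wcat /sz /=; lia.

Lemma test_bnd (U V B : wd) m : (sz (wcat U V) + sz B <= m.+1)%N -> (sz V + sz B <= m)%N.
Proof. move=> H. bnd. Qed.

Unset Implicit Arguments.
Unset Implicit Arguments.

Lemma Wsw45 (I : ZX -> Prop) (HI : ideal_ok I) (m : nat) (HC : PC I m) (HS : PS I m) (y1 y2 y3 y4 y5 y6 y7 : wd) :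
  (sz y1 + sz y2 + sz y3 + sz y4 + sz y5 + sz y6 + sz y7 <= m.+1)%N ->
  I (W7 (Mw y1) (Mw y2) (Mw y3) (Mw y4) (Mw y5) (Mw y6) (Mw y7) + (W7 (Mw y1) (Mw y2) (Mw y3) (Mw y5) (Mw y4) (Mw y6) (Mw y7))).
Proof.
move=> Hb.
have h1 := (HS y3 y4 y5 y6 y7 ltac:(bnd)).1.
rewrite ?Mw_wcat in h1.
have -> : W7 (Mw y1) (Mw y2) (Mw y3) (Mw y4) (Mw y5) (Mw y6) (Mw y7) + (W7 (Mw y1) (Mw y2) (Mw y3) (Mw y5) (Mw y4) (Mw y6) (Mw y7)) =
  (comm (Mw y1) (Mw y2)) * (S23s (Mw y3) (Mw y4) (Mw y5) (Mw y6) (Mw y7)) by ncu2.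
imemb HI.
Qed.

Lemma Wsw67 (I : ZX -> Prop) (HI : ideal_ok I) (m : nat) (HC : PC I m) (HS : PS I m) (y1 y2 y3 y4 y5 y6 y7 : wd) :
  (sz y1 + sz y2 + sz y3 + sz y4 + sz y5 + sz y6 + sz y7 <= m.+1)%N ->
  I (W7 (Mw y1) (Mw y2) (Mw y3) (Mw y4) (Mw y5) (Mw y6) (Mw y7) + (W7 (Mw y1) (Mw y2) (Mw y3) (Mw y4) (Mw y5) (Mw y7) (Mw y6))).
Proof.
move=> Hb.
have h1 := (HS y3 y4 y5 y6 y7 ltac:(bnd)).2.
rewrite ?Mw_wcat in h1.
have -> : W7 (Mw y1) (Mw y2) (Mw y3) (Mw y4) (Mw y5) (Mw y6) (Mw y7) + (W7 (Mw y1) (Mw y2) (Mw y3) (Mw y4) (Mw y5) (Mw y7) (Mw y6)) =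
  (comm (Mw y1) (Mw y2)) * (S45s (Mw y3) (Mw y4) (Mw y5) (Mw y6) (Mw y7)) by ncu2.
imemb HI.
Qed.

Lemma Wsw23 (I : ZX -> Prop) (HI : ideal_ok I) (m : nat) (HC : PC I m) (HS : PS I m) (y1 y2 y3 y4 y5 y6 y7 : wd) :
  (sz y1 + sz y2 + sz y3 + sz y4 + sz y5 + sz y6 + sz y7 <= m.+1)%N ->
  I (W7 (Mw y1) (Mw y2) (Mw y3) (Mw y4) (Mw y5) (Mw y6) (Mw y7) + (W7 (Mw y1) (Mw y3) (Mw y2) (Mw y4) (Mw y5) (Mw y6) (Mw y7))).
Proof.
move=> Hb.
have h1 := (HS y1 y2 y5 y6 y7 ltac:(bnd)).1.
rewrite ?Mw_wcat in h1.
have h2 := HC y1 y2 y3 y4 ltac:(bnd).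
rewrite ?Mw_wcat in h2.
have h3 := HC y1 y2 y4 y3 ltac:(bnd).
rewrite ?Mw_wcat in h3.
have h4 := HC y1 y5 y3 y4 ltac:(bnd).
rewrite ?Mw_wcat in h4.
have h5 := HC y1 y5 y4 y3 ltac:(bnd).
rewrite ?Mw_wcat in h5.
have h6 := (HS y4 y3 y2 y6 y7 ltac:(bnd)).1.
rewrite ?Mw_wcat in h6.
have h7 := (HS y1 y5 y3 y6 y7 ltac:(bnd)).1.
rewrite ?Mw_wcat in h7.
have h8 := HC y1 y5 y2 y4 ltac:(bnd).
rewrite ?Mw_wcat in h8.
have h9 := HC y1 y5 y4 y2 ltac:(bnd).
rewrite ?Mw_wcat in h9.
have h10 := HC y1 y3 y2 y4 ltac:(bnd).
rewrite ?Mw_wcat in h10.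
have h11 := HC y1 y3 y4 y2 ltac:(bnd).
rewrite ?Mw_wcat in h11.
have -> : W7 (Mw y1) (Mw y2) (Mw y3) (Mw y4) (Mw y5) (Mw y6) (Mw y7) + (W7 (Mw y1) (Mw y3) (Mw y2) (Mw y4) (Mw y5) (Mw y6) (Mw y7)) =
  (comm (Mw y3) (Mw y4)) * (S23s (Mw y1) (Mw y2) (Mw y5) (Mw y6) (Mw y7)) + ((c4 (Mw y1) (Mw y2) (Mw y3) (Mw y4) - (c4 (Mw y1) (Mw y2) (Mw y4) (Mw y3))) * (c3 (Mw y5) (Mw y6) (Mw y7))) + ((c4 (Mw y1) (Mw y5) (Mw y3) (Mw y4) - (c4 (Mw y1) (Mw y5) (Mw y4) (Mw y3))) * (c3 (Mw y2) (Mw y6) (Mw y7))) - (- ((comm (Mw y1) (Mw y5)) * (S23s (Mw y4) (Mw y3) (Mw y2) (Mw y6) (Mw y7)))) + ((comm (Mw y2) (Mw y4)) * (S23s (Mw y1) (Mw y5) (Mw y3) (Mw y6) (Mw y7)) + ((c4 (Mw y1) (Mw y5) (Mw y2) (Mw y4) - (c4 (Mw y1) (Mw y5) (Mw y4) (Mw y2))) * (c3 (Mw y3) (Mw y6) (Mw y7))) + ((c4 (Mw y1) (Mw y3) (Mw y2) (Mw y4) - (c4 (Mw y1) (Mw y3) (Mw y4) (Mw y2))) * (c3 (Mw y5) (Mw y6) (Mw y7)))) by ncu2.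
imemb HI.
Qed.

Lemma Kcomm (I : ZX -> Prop) (HI : ideal_ok I) (m : nat) (HC : PC I m) (a b c d e f : wd) :
  (sz a + sz b + sz c + sz d + sz e + sz f <= m.+1)%N ->
  I (K6 (Mw a) (Mw b) (Mw c) (Mw d) (Mw e) (Mw f) - (K6 (Mw d) (Mw e) (Mw f) (Mw a) (Mw b) (Mw c))).
Proof.
move=> Hb.
have h1 := HC a b c (wcat d e) ltac:(bnd).
rewrite ?Mw_wcat in h1.
have h2 := HC a b c (wcat e d) ltac:(bnd).
rewrite ?Mw_wcat in h2.
have h3 := HC a b c f ltac:(bnd).
rewrite ?Mw_wcat in h3.
have -> : K6 (Mw a) (Mw b) (Mw c) (Mw d) (Mw e) (Mw f) - (K6 (Mw d) (Mw e) (Mw f) (Mw a) (Mw b) (Mw c)) =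
  (c4 (Mw a) (Mw b) (Mw c) (Mw d * Mw e) - (c4 (Mw a) (Mw b) (Mw c) (Mw e * Mw d))) * ((Mw f)) - (((Mw f)) * (c4 (Mw a) (Mw b) (Mw c) (Mw d * Mw e) - (c4 (Mw a) (Mw b) (Mw c) (Mw e * Mw d)))) + ((comm (Mw d) (Mw e)) * (c4 (Mw a) (Mw b) (Mw c) (Mw f))) - ((c4 (Mw a) (Mw b) (Mw c) (Mw f)) * (comm (Mw d) (Mw e))) by ncu2.
imemb HI.
Qed.

Lemma DK1 (I : ZX -> Prop) (HI : ideal_ok I) (m : nat) (HC : PC I m) (HS : PS I m) (U V B C D E F : wd) :
  (sz U + sz V + sz B + sz C + sz D + sz E + sz F <= m.+1)%N ->
  I (K6 (Mw U * Mw V) (Mw B) (Mw C) (Mw D) (Mw E) (Mw F) - (((Mw U)) * (K6 (Mw V) (Mw B) (Mw C) (Mw D) (Mw E) (Mw F))) - ((K6 (Mw U) (Mw B) (Mw C) (Mw D) (Mw E) (Mw F)) * ((Mw V)))).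
Proof.
move=> Hb.
have h1 := HC D E F V ltac:(bnd).
rewrite ?Mw_wcat in h1.
have h2 := Wsw23 _ HI _ HC HS U C V B D E F ltac:(bnd).
rewrite ?Mw_wcat in h2.
have h3 := Wsw23 _ HI _ HC HS U V B C D E F ltac:(bnd).
rewrite ?Mw_wcat in h3.
have -> : K6 (Mw U * Mw V) (Mw B) (Mw C) (Mw D) (Mw E) (Mw F) - (((Mw U)) * (K6 (Mw V) (Mw B) (Mw C) (Mw D) (Mw E) (Mw F))) - ((K6 (Mw U) (Mw B) (Mw C) (Mw D) (Mw E) (Mw F)) * ((Mw V))) =
  W7 (Mw U) (Mw C) (Mw V) (Mw B) (Mw D) (Mw E) (Mw F) + (W7 (Mw U) (Mw V) (Mw C) (Mw B) (Mw D) (Mw E) (Mw F)) + (W7 (Mw U) (Mw V) (Mw B) (Mw C) (Mw D) (Mw E) (Mw F) + (W7 (Mw U) (Mw B) (Mw V) (Mw C) (Mw D) (Mw E) (Mw F))) - ((c3 (Mw U) (Mw B) (Mw C)) * (c4 (Mw D) (Mw E) (Mw F) (Mw V))) by ncu2.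
imemb HI.
Qed.

Lemma DK3 (I : ZX -> Prop) (HI : ideal_ok I) (m : nat) (HC : PC I m) (A B U V D E F : wd) :
  (sz A + sz B + sz U + sz V + sz D + sz E + sz F <= m.+1)%N ->
  I (K6 (Mw A) (Mw B) (Mw U * Mw V) (Mw D) (Mw E) (Mw F) - (((Mw U)) * (K6 (Mw A) (Mw B) (Mw V) (Mw D) (Mw E) (Mw F))) - ((K6 (Mw A) (Mw B) (Mw U) (Mw D) (Mw E) (Mw F)) * ((Mw V)))).
Proof.
move=> Hb.
have h1 := HC D E F V ltac:(bnd).
rewrite ?Mw_wcat in h1.
have -> : K6 (Mw A) (Mw B) (Mw U * Mw V) (Mw D) (Mw E) (Mw F) - (((Mw U)) * (K6 (Mw A) (Mw B) (Mw V) (Mw D) (Mw E) (Mw F))) - ((K6 (Mw A) (Mw B) (Mw U) (Mw D) (Mw E) (Mw F)) * ((Mw V))) =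
  - ((c3 (Mw A) (Mw B) (Mw U)) * (c4 (Mw D) (Mw E) (Mw F) (Mw V))) by ncu2.
imemb HI.
Qed.

Lemma DK2 (I : ZX -> Prop) (HI : ideal_ok I) (m : nat) (HC : PC I m) (HS : PS I m) (A U V C D E F : wd) :
  (sz A + sz U + sz V + sz C + sz D + sz E + sz F <= m.+1)%N ->
  I (K6 (Mw A) (Mw U * Mw V) (Mw C) (Mw D) (Mw E) (Mw F) - (((Mw U)) * (K6 (Mw A) (Mw V) (Mw C) (Mw D) (Mw E) (Mw F))) - ((K6 (Mw A) (Mw U) (Mw C) (Mw D) (Mw E) (Mw F)) * ((Mw V)))).
Proof.
move=> Hb.
have h1 := DK1 _ HI _ HC HS U V A C D E F ltac:(bnd).
rewrite ?Mw_wcat in h1.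
have -> : K6 (Mw A) (Mw U * Mw V) (Mw C) (Mw D) (Mw E) (Mw F) - (((Mw U)) * (K6 (Mw A) (Mw V) (Mw C) (Mw D) (Mw E) (Mw F))) - ((K6 (Mw A) (Mw U) (Mw C) (Mw D) (Mw E) (Mw F)) * ((Mw V))) =
  - (K6 (Mw U * Mw V) (Mw A) (Mw C) (Mw D) (Mw E) (Mw F) - (((Mw U)) * (K6 (Mw V) (Mw A) (Mw C) (Mw D) (Mw E) (Mw F))) - ((K6 (Mw U) (Mw A) (Mw C) (Mw D) (Mw E) (Mw F)) * ((Mw V)))) by ncu2.
imemb HI.
Qed.

Lemma Kslot1 (I : ZX -> Prop) (HI : ideal_ok I) (m : nat) (HC : PC I m) (HS : PS I m) (HK : PK I m) (U V B C D E F : wd) :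
  (sz U + sz V + sz B + sz C + sz D + sz E + sz F <= m.+1)%N ->
  I (K6 (Mw (wcat U V)) (Mw B) (Mw C) (Mw D) (Mw E) (Mw F)).
Proof.
move=> Hb.
rewrite Mw_wcat.
have h1 := DK1 _ HI _ HC HS U V B C D E F ltac:(bnd).
rewrite ?Mw_wcat in h1.
have h2 := HK V B C D E F ltac:(bnd).
rewrite ?Mw_wcat in h2.
have h3 := HK U B C D E F ltac:(bnd).
rewrite ?Mw_wcat in h3.
have -> : K6 (Mw U * Mw V) (Mw B) (Mw C) (Mw D) (Mw E) (Mw F) =
  K6 (Mw U * Mw V) (Mw B) (Mw C) (Mw D) (Mw E) (Mw F) - (((Mw U)) * (K6 (Mw V) (Mw B) (Mw C) (Mw D) (Mw E) (Mw F))) - ((K6 (Mw U) (Mw B) (Mw C) (Mw D) (Mw E) (Mw F)) * ((Mw V))) + (((Mw U)) * (K6 (Mw V) (Mw B) (Mw C) (Mw D) (Mw E) (Mw F))) + ((K6 (Mw U) (Mw B) (Mw C) (Mw D) (Mw E) (Mw F)) * ((Mw V))) by ncu2.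
imemb HI.
Qed.

Lemma Kslot2 (I : ZX -> Prop) (HI : ideal_ok I) (m : nat) (HC : PC I m) (HS : PS I m) (HK : PK I m) (A U V C D E F : wd) :
  (sz A + sz U + sz V + sz C + sz D + sz E + sz F <= m.+1)%N ->
  I (K6 (Mw A) (Mw (wcat U V)) (Mw C) (Mw D) (Mw E) (Mw F)).
Proof.
move=> Hb.
rewrite Mw_wcat.
have h1 := DK2 _ HI _ HC HS A U V C D E F ltac:(bnd).
rewrite ?Mw_wcat in h1.
have h2 := HK A V C D E F ltac:(bnd).
rewrite ?Mw_wcat in h2.
have h3 := HK A U C D E F ltac:(bnd).
rewrite ?Mw_wcat in h3.
have -> : K6 (Mw A) (Mw U * Mw V) (Mw C) (Mw D) (Mw E) (Mw F) =
  K6 (Mw A) (Mw U * Mw V) (Mw C) (Mw D) (Mw E) (Mw F) - (((Mw U)) * (K6 (Mw A) (Mw V) (Mw C) (Mw D) (Mw E) (Mw F))) - ((K6 (Mw A) (Mw U) (Mw C) (Mw D) (Mw E) (Mw F)) * ((Mw V))) + (((Mw U)) * (K6 (Mw A) (Mw V) (Mw C) (Mw D) (Mw E) (Mw F))) + ((K6 (Mw A) (Mw U) (Mw C) (Mw D) (Mw E) (Mw F)) * ((Mw V))) by ncu2.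
imemb HI.
Qed.

Lemma Kslot3 (I : ZX -> Prop) (HI : ideal_ok I) (m : nat) (HC : PC I m) (HS : PS I m) (HK : PK I m) (A B U V D E F : wd) :
  (sz A + sz B + sz U + sz V + sz D + sz E + sz F <= m.+1)%N ->
  I (K6 (Mw A) (Mw B) (Mw (wcat U V)) (Mw D) (Mw E) (Mw F)).
Proof.
move=> Hb.
rewrite Mw_wcat.
have h1 := DK3 _ HI _ HC A B U V D E F ltac:(bnd).
rewrite ?Mw_wcat in h1.
have h2 := HK A B V D E F ltac:(bnd).
rewrite ?Mw_wcat in h2.
have h3 := HK A B U D E F ltac:(bnd).
rewrite ?Mw_wcat in h3.
have -> : K6 (Mw A) (Mw B) (Mw U * Mw V) (Mw D) (Mw E) (Mw F) =
  K6 (Mw A) (Mw B) (Mw U * Mw V) (Mw D) (Mw E) (Mw F) - (((Mw U)) * (K6 (Mw A) (Mw B) (Mw V) (Mw D) (Mw E) (Mw F))) - ((K6 (Mw A) (Mw B) (Mw U) (Mw D) (Mw E) (Mw F)) * ((Mw V))) + (((Mw U)) * (K6 (Mw A) (Mw B) (Mw V) (Mw D) (Mw E) (Mw F))) + ((K6 (Mw A) (Mw B) (Mw U) (Mw D) (Mw E) (Mw F)) * ((Mw V))) by ncu2.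
imemb HI.
Qed.

Lemma Kslot4 (I : ZX -> Prop) (HI : ideal_ok I) (m : nat) (HC : PC I m) (HS : PS I m) (HK : PK I m) (a b c U V e f : wd) :
  (sz a + sz b + sz c + sz U + sz V + sz e + sz f <= m.+1)%N ->
  I (K6 (Mw a) (Mw b) (Mw c) (Mw (wcat U V)) (Mw e) (Mw f)).
Proof.
move=> Hb.
rewrite Mw_wcat.
have h1 := Kcomm _ HI _ HC a b c (wcat U V) e f ltac:(bnd).
rewrite ?Mw_wcat in h1.
have h2 := Kslot1 _ HI _ HC HS HK U V e f a b c ltac:(bnd).
rewrite ?Mw_wcat in h2.
have -> : K6 (Mw a) (Mw b) (Mw c) (Mw U * Mw V) (Mw e) (Mw f) =
  K6 (Mw a) (Mw b) (Mw c) (Mw U * Mw V) (Mw e) (Mw f) - (K6 (Mw U * Mw V) (Mw e) (Mw f) (Mw a) (Mw b) (Mw c)) + (K6 (Mw U * Mw V) (Mw e) (Mw f) (Mw a) (Mw b) (Mw c)) by ncu2.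
imemb HI.
Qed.

Lemma Kslot5 (I : ZX -> Prop) (HI : ideal_ok I) (m : nat) (HC : PC I m) (HS : PS I m) (HK : PK I m) (a b c d U V f : wd) :
  (sz a + sz b + sz c + sz d + sz U + sz V + sz f <= m.+1)%N ->
  I (K6 (Mw a) (Mw b) (Mw c) (Mw d) (Mw (wcat U V)) (Mw f)).
Proof.
move=> Hb.
rewrite Mw_wcat.
have h1 := Kcomm _ HI _ HC a b c d (wcat U V) f ltac:(bnd).
rewrite ?Mw_wcat in h1.
have h2 := Kslot2 _ HI _ HC HS HK d U V f a b c ltac:(bnd).
rewrite ?Mw_wcat in h2.
have -> : K6 (Mw a) (Mw b) (Mw c) (Mw d) (Mw U * Mw V) (Mw f) =
  K6 (Mw a) (Mw b) (Mw c) (Mw d) (Mw U * Mw V) (Mw f) - (K6 (Mw d) (Mw U * Mw V) (Mw f) (Mw a) (Mw b) (Mw c)) + (K6 (Mw d) (Mw U * Mw V) (Mw f) (Mw a) (Mw b) (Mw c)) by ncu2.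
imemb HI.
Qed.

Lemma Kslot6 (I : ZX -> Prop) (HI : ideal_ok I) (m : nat) (HC : PC I m) (HS : PS I m) (HK : PK I m) (a b c d e U V : wd) :
  (sz a + sz b + sz c + sz d + sz e + sz U + sz V <= m.+1)%N ->
  I (K6 (Mw a) (Mw b) (Mw c) (Mw d) (Mw e) (Mw (wcat U V))).
Proof.
move=> Hb.
rewrite Mw_wcat.
have h1 := Kcomm _ HI _ HC a b c d e (wcat U V) ltac:(bnd).
rewrite ?Mw_wcat in h1.
have h2 := Kslot3 _ HI _ HC HS HK d e U V a b c ltac:(bnd).
rewrite ?Mw_wcat in h2.
have -> : K6 (Mw a) (Mw b) (Mw c) (Mw d) (Mw e) (Mw U * Mw V) =
  K6 (Mw a) (Mw b) (Mw c) (Mw d) (Mw e) (Mw U * Mw V) - (K6 (Mw d) (Mw e) (Mw U * Mw V) (Mw a) (Mw b) (Mw c)) + (K6 (Mw d) (Mw e) (Mw U * Mw V) (Mw a) (Mw b) (Mw c)) by ncu2.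
imemb HI.
Qed.


Unset Implicit Arguments.

Lemma DQ1 (I : ZX -> Prop) (HI : ideal_ok I) (m : nat) (HC : PC I m) (HS : PS I m) (U V B C D E F : wd) :
  (sz U + sz V + sz B + sz C + sz D + sz E + sz F <= m.+1)%N ->
  I (Q6 (Mw U * Mw V) (Mw B) (Mw C) (Mw D) (Mw E) (Mw F) - (((Mw U)) * (Q6 (Mw V) (Mw B) (Mw C) (Mw D) (Mw E) (Mw F))) - ((Q6 (Mw U) (Mw B) (Mw C) (Mw D) (Mw E) (Mw F)) * ((Mw V))) + (W7 (Mw U) (Mw B) (Mw C) (Mw D) (Mw E) (Mw F) (Mw V) + (W7 (Mw U) (Mw B) (Mw C) (Mw D) (Mw E) (Mw F) (Mw V)))).
Proof.
move=> Hb.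
have h1 := HC C D V (wcat E F) ltac:(bnd).
rewrite ?Mw_wcat in h1.
have h2 := HC C D V (wcat F E) ltac:(bnd).
rewrite ?Mw_wcat in h2.
have h3 := Wsw45 _ HI _ HC HS U B E F C D V ltac:(bnd).
rewrite ?Mw_wcat in h3.
have h4 := Wsw45 _ HI _ HC HS U B C E D F V ltac:(bnd).
rewrite ?Mw_wcat in h4.
have -> : Q6 (Mw U * Mw V) (Mw B) (Mw C) (Mw D) (Mw E) (Mw F) - (((Mw U)) * (Q6 (Mw V) (Mw B) (Mw C) (Mw D) (Mw E) (Mw F))) - ((Q6 (Mw U) (Mw B) (Mw C) (Mw D) (Mw E) (Mw F)) * ((Mw V))) + (W7 (Mw U) (Mw B) (Mw C) (Mw D) (Mw E) (Mw F) (Mw V) + (W7 (Mw U) (Mw B) (Mw C) (Mw D) (Mw E) (Mw F) (Mw V))) =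
  - (W7 (Mw U) (Mw B) (Mw E) (Mw F) (Mw C) (Mw D) (Mw V) + (W7 (Mw U) (Mw B) (Mw E) (Mw C) (Mw F) (Mw D) (Mw V)) + (- (W7 (Mw U) (Mw B) (Mw C) (Mw E) (Mw D) (Mw F) (Mw V) + (W7 (Mw U) (Mw B) (Mw C) (Mw D) (Mw E) (Mw F) (Mw V))))) - ((comm (Mw U) (Mw B)) * (c4 (Mw C) (Mw D) (Mw V) (Mw E * Mw F) - (c4 (Mw C) (Mw D) (Mw V) (Mw F * Mw E)))) by ncu2.
imemb HI.
Qed.

Lemma DQ3 (I : ZX -> Prop) (HI : ideal_ok I) (m : nat) (HC : PC I m) (HS : PS I m) (A B U V D E F : wd) :
  (sz A + sz B + sz U + sz V + sz D + sz E + sz F <= m.+1)%N ->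
  I (Q6 (Mw A) (Mw B) (Mw U * Mw V) (Mw D) (Mw E) (Mw F) - (((Mw U)) * (Q6 (Mw A) (Mw B) (Mw V) (Mw D) (Mw E) (Mw F))) - ((Q6 (Mw A) (Mw B) (Mw U) (Mw D) (Mw E) (Mw F)) * ((Mw V))) + (W7 (Mw A) (Mw B) (Mw U) (Mw D) (Mw E) (Mw F) (Mw V) + (W7 (Mw A) (Mw B) (Mw U) (Mw D) (Mw E) (Mw F) (Mw V)))).
Proof.
move=> Hb.
have h1 := HC A B U (wcat V D) ltac:(bnd).
rewrite ?Mw_wcat in h1.
have h2 := HC A B U (wcat D V) ltac:(bnd).
rewrite ?Mw_wcat in h2.
have h3 := HC A B U (wcat E F) ltac:(bnd).
rewrite ?Mw_wcat in h3.
have h4 := HC A B U (wcat F E) ltac:(bnd).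
rewrite ?Mw_wcat in h4.
have h5 := Wsw23 _ HI _ HC HS D V E F A B U ltac:(bnd).
rewrite ?Mw_wcat in h5.
have h6 := Wsw45 _ HI _ HC HS D E F V A B U ltac:(bnd).
rewrite ?Mw_wcat in h6.
have h7 := Wsw67 _ HI _ HC HS D E F A B V U ltac:(bnd).
rewrite ?Mw_wcat in h7.
have h8 := Wsw45 _ HI _ HC HS D E A F B U V ltac:(bnd).
rewrite ?Mw_wcat in h8.
have h9 := Wsw23 _ HI _ HC HS D E A B U F V ltac:(bnd).
rewrite ?Mw_wcat in h9.
have h10 := Wsw45 _ HI _ HC HS D A B E U F V ltac:(bnd).
rewrite ?Mw_wcat in h10.
have h11 := Wsw23 _ HI _ HC HS A D B U E F V ltac:(bnd).
rewrite ?Mw_wcat in h11.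
have -> : Q6 (Mw A) (Mw B) (Mw U * Mw V) (Mw D) (Mw E) (Mw F) - (((Mw U)) * (Q6 (Mw A) (Mw B) (Mw V) (Mw D) (Mw E) (Mw F))) - ((Q6 (Mw A) (Mw B) (Mw U) (Mw D) (Mw E) (Mw F)) * ((Mw V))) + (W7 (Mw A) (Mw B) (Mw U) (Mw D) (Mw E) (Mw F) (Mw V) + (W7 (Mw A) (Mw B) (Mw U) (Mw D) (Mw E) (Mw F) (Mw V))) =
  - (W7 (Mw D) (Mw V) (Mw E) (Mw F) (Mw A) (Mw B) (Mw U) + (W7 (Mw D) (Mw E) (Mw V) (Mw F) (Mw A) (Mw B) (Mw U))) + (- (W7 (Mw D) (Mw E) (Mw F) (Mw V) (Mw A) (Mw B) (Mw U) + (W7 (Mw D) (Mw E) (Mw F) (Mw A) (Mw V) (Mw B) (Mw U)))) + (- (W7 (Mw D) (Mw E) (Mw F) (Mw A) (Mw B) (Mw V) (Mw U) + (W7 (Mw D) (Mw E) (Mw F) (Mw A) (Mw B) (Mw U) (Mw V)))) + (- (W7 (Mw D) (Mw E) (Mw A) (Mw F) (Mw B) (Mw U) (Mw V) + (W7 (Mw D) (Mw E) (Mw A) (Mw B) (Mw F) (Mw U) (Mw V)))) + (- (W7 (Mw D) (Mw E) (Mw A) (Mw B) (Mw U) (Mw F) (Mw V) + (W7 (Mw D) (Mw A) (Mw E) (Mw B) (Mw U) (Mw F) (Mw V)))) + (- (W7 (Mw D) (Mw A) (Mw B) (Mw E) (Mw U) (Mw F) (Mw V) + (W7 (Mw D)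 (Mw A) (Mw B) (Mw U) (Mw E) (Mw F) (Mw V)))) + (- (W7 (Mw A) (Mw D) (Mw B) (Mw U) (Mw E) (Mw F) (Mw V) + (W7 (Mw A) (Mw B) (Mw D) (Mw U) (Mw E) (Mw F) (Mw V)))) + ((c4 (Mw A) (Mw B) (Mw U) (Mw V * Mw D) - (c4 (Mw A) (Mw B) (Mw U) (Mw D * Mw V))) * (comm (Mw E) (Mw F))) + ((comm (Mw V) (Mw D)) * (c4 (Mw A) (Mw B) (Mw U) (Mw E * Mw F) - (c4 (Mw A) (Mw B) (Mw U) (Mw F * Mw E)))) by ncu2.
imemb HI.
Qed.

Lemma DQ5 (I : ZX -> Prop) (HI : ideal_ok I) (m : nat) (HC : PC I m) (HS : PS I m) (A B C D U V F : wd) :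
  (sz A + sz B + sz C + sz D + sz U + sz V + sz F <= m.+1)%N ->
  I (Q6 (Mw A) (Mw B) (Mw C) (Mw D) (Mw U * Mw V) (Mw F) - (((Mw U)) * (Q6 (Mw A) (Mw B) (Mw C) (Mw D) (Mw V) (Mw F))) - ((Q6 (Mw A) (Mw B) (Mw C) (Mw D) (Mw U) (Mw F)) * ((Mw V))) + (W7 (Mw A) (Mw B) (Mw C) (Mw D) (Mw U) (Mw F) (Mw V) + (W7 (Mw A) (Mw B) (Mw C) (Mw D) (Mw U) (Mw F) (Mw V)))).
Proof.
move=> Hb.
have h1 := HC A B U (wcat C D) ltac:(bnd).
rewrite ?Mw_wcat in h1.
have h2 := HC A B U (wcat D C) ltac:(bnd).
rewrite ?Mw_wcat in h2.
have h3 := HC A B U (wcat V F) ltac:(bnd).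
rewrite ?Mw_wcat in h3.
have h4 := HC A B U (wcat F V) ltac:(bnd).
rewrite ?Mw_wcat in h4.
have h5 := HC C D U (wcat V F) ltac:(bnd).
rewrite ?Mw_wcat in h5.
have h6 := HC C D U (wcat F V) ltac:(bnd).
rewrite ?Mw_wcat in h6.
have h7 := Wsw45 _ HI _ HC HS C D F V A B U ltac:(bnd).
rewrite ?Mw_wcat in h7.
have h8 := Wsw67 _ HI _ HC HS C D F A B V U ltac:(bnd).
rewrite ?Mw_wcat in h8.
have h9 := Wsw45 _ HI _ HC HS C D A F B U V ltac:(bnd).
rewrite ?Mw_wcat in h9.
have h10 := Wsw23 _ HI _ HC HS C D A B U F V ltac:(bnd).
rewrite ?Mw_wcat in h10.
have h11 := Wsw23 _ HI _ HC HS A C B D U F V ltac:(bnd).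
rewrite ?Mw_wcat in h11.
have h12 := Wsw45 _ HI _ HC HS A B F V C D U ltac:(bnd).
rewrite ?Mw_wcat in h12.
have h13 := Wsw67 _ HI _ HC HS A B F C D V U ltac:(bnd).
rewrite ?Mw_wcat in h13.
have h14 := Wsw45 _ HI _ HC HS A B C F D U V ltac:(bnd).
rewrite ?Mw_wcat in h14.
have -> : Q6 (Mw A) (Mw B) (Mw C) (Mw D) (Mw U * Mw V) (Mw F) - (((Mw U)) * (Q6 (Mw A) (Mw B) (Mw C) (Mw D) (Mw V) (Mw F))) - ((Q6 (Mw A) (Mw B) (Mw C) (Mw D) (Mw U) (Mw F)) * ((Mw V))) + (W7 (Mw A) (Mw B) (Mw C) (Mw D) (Mw U) (Mw F) (Mw V) + (W7 (Mw A) (Mw B) (Mw C) (Mw D) (Mw U) (Mw F) (Mw V))) =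
  - (W7 (Mw C) (Mw D) (Mw F) (Mw V) (Mw A) (Mw B) (Mw U) + (W7 (Mw C) (Mw D) (Mw F) (Mw A) (Mw V) (Mw B) (Mw U))) + (- (W7 (Mw C) (Mw D) (Mw F) (Mw A) (Mw B) (Mw V) (Mw U) + (W7 (Mw C) (Mw D) (Mw F) (Mw A) (Mw B) (Mw U) (Mw V)))) + (- (W7 (Mw C) (Mw D) (Mw A) (Mw F) (Mw B) (Mw U) (Mw V) + (W7 (Mw C) (Mw D) (Mw A) (Mw B) (Mw F) (Mw U) (Mw V)))) + (- (W7 (Mw C) (Mw D) (Mw A) (Mw B) (Mw U) (Mw F) (Mw V) + (W7 (Mw C) (Mw A) (Mw D) (Mw B) (Mw U) (Mw F) (Mw V)))) + (W7 (Mw A) (Mw C) (Mw B) (Mw D) (Mw U) (Mw F) (Mw V) + (W7 (Mw A) (Mw B) (Mw C) (Mw D) (Mw U) (Mw F) (Mw V))) + ((c4 (Mw A) (Mw B) (Mw U) (Mw C * Mw D) - (c4 (Mw A) (Mw B) (Mw U) (Mw D * Mw C))) * (comm (Mw V) (Mw F))) + ((comm (Mw C) (Mw D)) * (c4 (Mw A) (Mw B) (Mw U) (Mw V * Mw F) - (c4 (Mw A) (Mw B) (Mw U) (Mw F * Mw V)))) + (- (W7 (Mw A) (Mw B) (Mw F) (Mw V) (Mw C) (Mw D) (Mw U) + (W7 (Mw A) (Mw B) (Mw F) (Mw C) (Mw V) (Mw D) (Mw U))) + (- (W7 (Mw A) (Mw B) (Mw F) (Mw C) (Mw D) (Mw V)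 (Mw U) + (W7 (Mw A) (Mw B) (Mw F) (Mw C) (Mw D) (Mw U) (Mw V)))) + (- (W7 (Mw A) (Mw B) (Mw C) (Mw F) (Mw D) (Mw U) (Mw V) + (W7 (Mw A) (Mw B) (Mw C) (Mw D) (Mw F) (Mw U) (Mw V))))) + ((comm (Mw A) (Mw B)) * (c4 (Mw C) (Mw D) (Mw U) (Mw V * Mw F) - (c4 (Mw C) (Mw D) (Mw U) (Mw F * Mw V)))) by ncu2.
imemb HI.
Qed.

Lemma DQ2 (I : ZX -> Prop) (HI : ideal_ok I) (m : nat) (HC : PC I m) (HS : PS I m) (A U V C D E F : wd) :
  (sz A + sz U + sz V + sz C + sz D + sz E + sz F <= m.+1)%N ->
  I (Q6 (Mw A) (Mw U * Mw V) (Mw C) (Mw D) (Mw E) (Mw F) - (((Mw U)) * (Q6 (Mw A) (Mw V) (Mw C) (Mw D) (Mw E) (Mw F))) - ((Q6 (Mw A) (Mw U) (Mw C) (Mw D) (Mw E) (Mw F)) * ((Mw V))) + (W7 (Mw A) (Mw U) (Mw C) (Mw D) (Mw E) (Mw F) (Mw V) + (W7 (Mw A) (Mw U) (Mw C) (Mw D) (Mw E) (Mw F) (Mw V)))).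
Proof.
move=> Hb.
have h1 := DQ1 _ HI _ HC HS U V A C D E F ltac:(bnd).
rewrite ?Mw_wcat in h1.
have -> : Q6 (Mw A) (Mw U * Mw V) (Mw C) (Mw D) (Mw E) (Mw F) - (((Mw U)) * (Q6 (Mw A) (Mw V) (Mw C) (Mw D) (Mw E) (Mw F))) - ((Q6 (Mw A) (Mw U) (Mw C) (Mw D) (Mw E) (Mw F)) * ((Mw V))) + (W7 (Mw A) (Mw U) (Mw C) (Mw D) (Mw E) (Mw F) (Mw V) + (W7 (Mw A) (Mw U) (Mw C) (Mw D) (Mw E) (Mw F) (Mw V))) =
  - (Q6 (Mw U * Mw V) (Mw A) (Mw C) (Mw D) (Mw E) (Mw F) - (((Mw U)) * (Q6 (Mw V) (Mw A) (Mw C) (Mw D) (Mw E) (Mw F))) - ((Q6 (Mw U) (Mw A) (Mw C) (Mw D) (Mw E) (Mw F)) * ((Mw V))) + (W7 (Mw U) (Mw A) (Mw C) (Mw D) (Mw E) (Mw F) (Mw V) + (W7 (Mw U) (Mw A) (Mw C) (Mw D) (Mw E) (Mw F) (Mw V)))) by ncu2.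
imemb HI.
Qed.

Lemma DQ4 (I : ZX -> Prop) (HI : ideal_ok I) (m : nat) (HC : PC I m) (HS : PS I m) (A B C U V E F : wd) :
  (sz A + sz B + sz C + sz U + sz V + sz E + sz F <= m.+1)%N ->
  I (Q6 (Mw A) (Mw B) (Mw C) (Mw U * Mw V) (Mw E) (Mw F) - (((Mw U)) * (Q6 (Mw A) (Mw B) (Mw C) (Mw V) (Mw E) (Mw F))) - ((Q6 (Mw A) (Mw B) (Mw C) (Mw U) (Mw E) (Mw F)) * ((Mw V))) + (W7 (Mw A) (Mw B) (Mw C) (Mw U) (Mw E) (Mw F) (Mw V) + (W7 (Mw A) (Mw B) (Mw C) (Mw U) (Mw E) (Mw F) (Mw V)))).
Proof.
move=> Hb.
have h1 := DQ3 _ HI _ HC HS A B U V C E F ltac:(bnd).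
rewrite ?Mw_wcat in h1.
have -> : Q6 (Mw A) (Mw B) (Mw C) (Mw U * Mw V) (Mw E) (Mw F) - (((Mw U)) * (Q6 (Mw A) (Mw B) (Mw C) (Mw V) (Mw E) (Mw F))) - ((Q6 (Mw A) (Mw B) (Mw C) (Mw U) (Mw E) (Mw F)) * ((Mw V))) + (W7 (Mw A) (Mw B) (Mw C) (Mw U) (Mw E) (Mw F) (Mw V) + (W7 (Mw A) (Mw B) (Mw C) (Mw U) (Mw E) (Mw F) (Mw V))) =
  - (Q6 (Mw A) (Mw B) (Mw U * Mw V) (Mw C) (Mw E) (Mw F) - (((Mw U)) * (Q6 (Mw A) (Mw B) (Mw V) (Mw C) (Mw E) (Mw F))) - ((Q6 (Mw A) (Mw B) (Mw U) (Mw C) (Mw E) (Mw F)) * ((Mw V))) + (W7 (Mw A) (Mw B) (Mw U) (Mw C) (Mw E) (Mw F) (Mw V) + (W7 (Mw A) (Mw B) (Mw U) (Mw C) (Mw E) (Mw F) (Mw V)))) by ncu2.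
imemb HI.
Qed.

Lemma DQ6 (I : ZX -> Prop) (HI : ideal_ok I) (m : nat) (HC : PC I m) (HS : PS I m) (A B C D E U V : wd) :
  (sz A + sz B + sz C + sz D + sz E + sz U + sz V <= m.+1)%N ->
  I (Q6 (Mw A) (Mw B) (Mw C) (Mw D) (Mw E) (Mw U * Mw V) - (((Mw U)) * (Q6 (Mw A) (Mw B) (Mw C) (Mw D) (Mw E) (Mw V))) - ((Q6 (Mw A) (Mw B) (Mw C) (Mw D) (Mw E) (Mw U)) * ((Mw V))) + (W7 (Mw A) (Mw B) (Mw C) (Mw D) (Mw E) (Mw U) (Mw V) + (W7 (Mw A) (Mw B) (Mw C) (Mw D) (Mw E) (Mw U) (Mw V)))).
Proof.
move=> Hb.
have h1 := DQ5 _ HI _ HC HS A B C D U V E ltac:(bnd).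
rewrite ?Mw_wcat in h1.
have -> : Q6 (Mw A) (Mw B) (Mw C) (Mw D) (Mw E) (Mw U * Mw V) - (((Mw U)) * (Q6 (Mw A) (Mw B) (Mw C) (Mw D) (Mw E) (Mw V))) - ((Q6 (Mw A) (Mw B) (Mw C) (Mw D) (Mw E) (Mw U)) * ((Mw V))) + (W7 (Mw A) (Mw B) (Mw C) (Mw D) (Mw E) (Mw U) (Mw V) + (W7 (Mw A) (Mw B) (Mw C) (Mw D) (Mw E) (Mw U) (Mw V))) =
  - (Q6 (Mw A) (Mw B) (Mw C) (Mw D) (Mw U * Mw V) (Mw E) - (((Mw U)) * (Q6 (Mw A) (Mw B) (Mw C) (Mw D) (Mw V) (Mw E))) - ((Q6 (Mw A) (Mw B) (Mw C) (Mw D) (Mw U) (Mw E)) * ((Mw V))) + (W7 (Mw A) (Mw B) (Mw C) (Mw D) (Mw U) (Mw E) (Mw V) + (W7 (Mw A) (Mw B) (Mw C) (Mw D) (Mw U) (Mw E) (Mw V)))) by ncu2.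
imemb HI.
Qed.

Lemma Q23slot1 (I : ZX -> Prop) (HI : ideal_ok I) (m : nat) (HC : PC I m) (HS : PS I m) (HQ : PQ I m) (U V B C D E F : wd) :
  (sz U + sz V + sz B + sz C + sz D + sz E + sz F <= m.+1)%N ->
  I (Q23s (Mw (wcat U V)) (Mw B) (Mw C) (Mw D) (Mw E) (Mw F)).
Proof.
move=> Hb.
rewrite Mw_wcat.
have h1 := DQ1 _ HI _ HC HS U V B C D E F ltac:(bnd).
rewrite ?Mw_wcat in h1.
have h2 := DQ1 _ HI _ HC HS U V C B D E F ltac:(bnd).
rewrite ?Mw_wcat in h2.
have h3 := (HQ V B C D E F ltac:(bnd)).1.
rewrite ?Mw_wcat in h3.
have h4 := (HQ U B C D E F ltac:(bnd)).1.
rewrite ?Mw_wcat in h4.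
have h5 := Wsw23 _ HI _ HC HS U B C D E F V ltac:(bnd).
rewrite ?Mw_wcat in h5.
have -> : Q23s (Mw U * Mw V) (Mw B) (Mw C) (Mw D) (Mw E) (Mw F) =
  Q6 (Mw U * Mw V) (Mw B) (Mw C) (Mw D) (Mw E) (Mw F) - (((Mw U)) * (Q6 (Mw V) (Mw B) (Mw C) (Mw D) (Mw E) (Mw F))) - ((Q6 (Mw U) (Mw B) (Mw C) (Mw D) (Mw E) (Mw F)) * ((Mw V))) + (W7 (Mw U) (Mw B) (Mw C) (Mw D) (Mw E) (Mw F) (Mw V) + (W7 (Mw U) (Mw B) (Mw C) (Mw D) (Mw E) (Mw F) (Mw V))) + (Q6 (Mw U * Mw V) (Mw C) (Mw B) (Mw D) (Mw E) (Mw F) - (((Mw U)) * (Q6 (Mw V) (Mw C) (Mw B) (Mw D) (Mw E) (Mw F))) - ((Q6 (Mw U) (Mw C) (Mw B) (Mw D) (Mw E) (Mw F)) * ((Mw V))) + (W7 (Mw U) (Mw C) (Mw B) (Mw D) (Mw E) (Mw F) (Mw V) + (W7 (Mw U) (Mw C) (Mw B) (Mw D) (Mw E) (Mw F) (Mw V)))) + (((Mw U)) * (Q23s (Mw V) (Mw B) (Mw C) (Mw D) (Mw E) (Mw F))) + ((Q23s (Mw U) (Mw B) (Mw C) (Mw D) (Mw E) (Mw F)) * ((Mw V))) - (W7 (Mw U) (Mw B) (Mw C) (Mw D) (Mw E) (Mw F) (Mw V) + (W7 (Mw U) (Mw C) (Mw B) (Mw D) (Mw E) (Mw F) (Mw V))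 + (W7 (Mw U) (Mw B) (Mw C) (Mw D) (Mw E) (Mw F) (Mw V) + (W7 (Mw U) (Mw C) (Mw B) (Mw D) (Mw E) (Mw F) (Mw V)))) by ncu2.
imemb HI.
Qed.

Lemma Q23slot2 (I : ZX -> Prop) (HI : ideal_ok I) (m : nat) (HC : PC I m) (HS : PS I m) (HQ : PQ I m) (A U V C D E F : wd) :
  (sz A + sz U + sz V + sz C + sz D + sz E + sz F <= m.+1)%N ->
  I (Q23s (Mw A) (Mw (wcat U V)) (Mw C) (Mw D) (Mw E) (Mw F)).
Proof.
move=> Hb.
rewrite Mw_wcat.
have h1 := DQ2 _ HI _ HC HS A U V C D E F ltac:(bnd).
rewrite ?Mw_wcat in h1.
have h2 := DQ3 _ HI _ HC HS A C U V D E F ltac:(bnd).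
rewrite ?Mw_wcat in h2.
have h3 := (HQ A V C D E F ltac:(bnd)).1.
rewrite ?Mw_wcat in h3.
have h4 := (HQ A U C D E F ltac:(bnd)).1.
rewrite ?Mw_wcat in h4.
have h5 := Wsw23 _ HI _ HC HS A U C D E F V ltac:(bnd).
rewrite ?Mw_wcat in h5.
have -> : Q23s (Mw A) (Mw U * Mw V) (Mw C) (Mw D) (Mw E) (Mw F) =
  Q6 (Mw A) (Mw U * Mw V) (Mw C) (Mw D) (Mw E) (Mw F) - (((Mw U)) * (Q6 (Mw A) (Mw V) (Mw C) (Mw D) (Mw E) (Mw F))) - ((Q6 (Mw A) (Mw U) (Mw C) (Mw D) (Mw E) (Mw F)) * ((Mw V))) + (W7 (Mw A) (Mw U) (Mw C) (Mw D) (Mw E) (Mw F) (Mw V) + (W7 (Mw A) (Mw U) (Mw C) (Mw D) (Mw E) (Mw F) (Mw V))) + (Q6 (Mw A) (Mw C) (Mw U * Mw V) (Mw D) (Mw E) (Mw F) - (((Mw U)) * (Q6 (Mw A) (Mw C) (Mw V) (Mw D) (Mw E) (Mw F))) - ((Q6 (Mw A) (Mw C) (Mw U) (Mw D) (Mw E) (Mw F)) * ((Mw V))) + (W7 (Mw A) (Mw C) (Mw U) (Mw D) (Mw E) (Mw F) (Mw V) + (W7 (Mw A) (Mw C) (Mw U) (Mw D) (Mw E) (Mw F) (Mw V)))) + (((Mw U)) * (Q23s (Mw A) (Mw V) (Mw C) (Mw D) (Mw E) (Mw F))) + ((Q23s (Mw A) (Mw U) (Mw C) (Mw D) (Mw E)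 (Mw F)) * ((Mw V))) - (W7 (Mw A) (Mw U) (Mw C) (Mw D) (Mw E) (Mw F) (Mw V) + (W7 (Mw A) (Mw C) (Mw U) (Mw D) (Mw E) (Mw F) (Mw V)) + (W7 (Mw A) (Mw U) (Mw C) (Mw D) (Mw E) (Mw F) (Mw V) + (W7 (Mw A) (Mw C) (Mw U) (Mw D) (Mw E) (Mw F) (Mw V)))) by ncu2.
imemb HI.
Qed.

Lemma Q23slot3 (I : ZX -> Prop) (HI : ideal_ok I) (m : nat) (HC : PC I m) (HS : PS I m) (HQ : PQ I m) (A B U V D E F : wd) :
  (sz A + sz B + sz U + sz V + sz D + sz E + sz F <= m.+1)%N ->
  I (Q23s (Mw A) (Mw B) (Mw (wcat U V)) (Mw D) (Mw E) (Mw F)).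
Proof.
move=> Hb.
rewrite Mw_wcat.
have h1 := DQ3 _ HI _ HC HS A B U V D E F ltac:(bnd).
rewrite ?Mw_wcat in h1.
have h2 := DQ2 _ HI _ HC HS A U V B D E F ltac:(bnd).
rewrite ?Mw_wcat in h2.
have h3 := (HQ A B V D E F ltac:(bnd)).1.
rewrite ?Mw_wcat in h3.
have h4 := (HQ A B U D E F ltac:(bnd)).1.
rewrite ?Mw_wcat in h4.
have h5 := Wsw23 _ HI _ HC HS A B U D E F V ltac:(bnd).
rewrite ?Mw_wcat in h5.
have -> : Q23s (Mw A) (Mw B) (Mw U * Mw V) (Mw D) (Mw E) (Mw F) =
  Q6 (Mw A) (Mw B) (Mw U * Mw V) (Mw D) (Mw E) (Mw F) - (((Mw U)) * (Q6 (Mw A) (Mw B) (Mw V) (Mw D) (Mw E) (Mw F))) - ((Q6 (Mw A) (Mw B) (Mw U) (Mw D) (Mw E) (Mw F)) * ((Mw V))) + (W7 (Mw A) (Mw B) (Mw U) (Mw D) (Mw E) (Mw F) (Mw V) + (W7 (Mw A) (Mw B) (Mw U) (Mw D) (Mw E) (Mw F) (Mw V))) + (Q6 (Mw A) (Mw U * Mw V) (Mw B) (Mw D) (Mw E) (Mw F) - (((Mw U)) * (Q6 (Mw A) (Mw V) (Mw B) (Mw D) (Mw E) (Mw F))) - ((Q6 (Mw A) (Mw U) (Mw B) (Mw D) (Mw E) (Mw F)) * ((Mw V))) + (W7 (Mw A) (Mw U) (Mw B) (Mw D) (Mw E) (Mw F) (Mw V) + (W7 (Mw A) (Mw U) (Mw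 B) (Mw D) (Mw E) (Mw F) (Mw V)))) + (((Mw U)) * (Q23s (Mw A) (Mw B) (Mw V) (Mw D) (Mw E) (Mw F))) + ((Q23s (Mw A) (Mw B) (Mw U) (Mw D) (Mw E) (Mw F)) * ((Mw V))) - (W7 (Mw A) (Mw B) (Mw U) (Mw D) (Mw E) (Mw F) (Mw V) + (W7 (Mw A) (Mw U) (Mw B) (Mw D) (Mw E) (Mw F) (Mw V)) + (W7 (Mw A) (Mw B) (Mw U) (Mw D) (Mw E) (Mw F) (Mw V) + (W7 (Mw A) (Mw U) (Mw B) (Mw D) (Mw E) (Mw F) (Mw V)))) by ncu2.
imemb HI.
Qed.

Lemma Q23slot4 (I : ZX -> Prop) (HI : ideal_ok I) (m : nat) (HC : PC I m) (HS : PS I m) (HQ : PQ I m) (A B C U V E F : wd) :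
  (sz A + sz B + sz C + sz U + sz V + sz E + sz F <= m.+1)%N ->
  I (Q23s (Mw A) (Mw B) (Mw C) (Mw (wcat U V)) (Mw E) (Mw F)).
Proof.
move=> Hb.
rewrite Mw_wcat.
have h1 := DQ4 _ HI _ HC HS A B C U V E F ltac:(bnd).
rewrite ?Mw_wcat in h1.
have h2 := DQ4 _ HI _ HC HS A C B U V E F ltac:(bnd).
rewrite ?Mw_wcat in h2.
have h3 := (HQ A B C V E F ltac:(bnd)).1.
rewrite ?Mw_wcat in h3.
have h4 := (HQ A B C U E F ltac:(bnd)).1.
rewrite ?Mw_wcat in h4.
have h5 := Wsw23 _ HI _ HC HS A B C U E F V ltac:(bnd).
rewrite ?Mw_wcat in h5.
have -> : Q23s (Mw A) (Mw B) (Mw C) (Mw U * Mw V) (Mw E) (Mw F) =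
  Q6 (Mw A) (Mw B) (Mw C) (Mw U * Mw V) (Mw E) (Mw F) - (((Mw U)) * (Q6 (Mw A) (Mw B) (Mw C) (Mw V) (Mw E) (Mw F))) - ((Q6 (Mw A) (Mw B) (Mw C) (Mw U) (Mw E) (Mw F)) * ((Mw V))) + (W7 (Mw A) (Mw B) (Mw C) (Mw U) (Mw E) (Mw F) (Mw V) + (W7 (Mw A) (Mw B) (Mw C) (Mw U) (Mw E) (Mw F) (Mw V))) + (Q6 (Mw A) (Mw C) (Mw B) (Mw U * Mw V) (Mw E) (Mw F) - (((Mw U)) * (Q6 (Mw A) (Mw C) (Mw B) (Mw V) (Mw E) (Mw F))) - ((Q6 (Mw A) (Mw C) (Mw B) (Mw U) (Mw E) (Mw F)) * ((Mw V))) + (W7 (Mw A) (Mw C) (Mw B) (Mw U) (Mw E) (Mw F) (Mw V) + (W7 (Mw A) (Mw C) (Mw B) (Mw U) (Mw E) (Mw F) (Mw V)))) + (((Mw U)) * (Q23s (Mw A) (Mw B) (Mw C) (Mw V) (Mw E) (Mw F))) + ((Q23s (Mw A) (Mw B) (Mw C) (Mw U) (Mw E) (Mw F)) * ((Mw V))) - (W7 (Mw A) (Mw B) (Mw C) (Mw U) (Mw E) (Mw F) (Mw V) + (W7 (Mw A) (Mw C) (Mw B) (Mw U) (Mw E) (Mw F) (Mw V)) + (W7 (Mw A) (Mw B) (Mw C) (Mw U) (Mw E) (Mw F) (Mw V) + (W7 (Mw A) (Mw C) (Mw B) (Mw U) (Mw E) (Mw F) (Mw V)))) by ncu2.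
imemb HI.
Qed.

Lemma Q23slot5 (I : ZX -> Prop) (HI : ideal_ok I) (m : nat) (HC : PC I m) (HS : PS I m) (HQ : PQ I m) (A B C D U V F : wd) :
  (sz A + sz B + sz C + sz D + sz U + sz V + sz F <= m.+1)%N ->
  I (Q23s (Mw A) (Mw B) (Mw C) (Mw D) (Mw (wcat U V)) (Mw F)).
Proof.
move=> Hb.
rewrite Mw_wcat.
have h1 := DQ5 _ HI _ HC HS A B C D U V F ltac:(bnd).
rewrite ?Mw_wcat in h1.
have h2 := DQ5 _ HI _ HC HS A C B D U V F ltac:(bnd).
rewrite ?Mw_wcat in h2.
have h3 := (HQ A B C D V F ltac:(bnd)).1.
rewrite ?Mw_wcat in h3.
have h4 := (HQ A B C D U F ltac:(bnd)).1.
rewrite ?Mw_wcat in h4.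
have h5 := Wsw23 _ HI _ HC HS A B C D U F V ltac:(bnd).
rewrite ?Mw_wcat in h5.
have -> : Q23s (Mw A) (Mw B) (Mw C) (Mw D) (Mw U * Mw V) (Mw F) =
  Q6 (Mw A) (Mw B) (Mw C) (Mw D) (Mw U * Mw V) (Mw F) - (((Mw U)) * (Q6 (Mw A) (Mw B) (Mw C) (Mw D) (Mw V) (Mw F))) - ((Q6 (Mw A) (Mw B) (Mw C) (Mw D) (Mw U) (Mw F)) * ((Mw V))) + (W7 (Mw A) (Mw B) (Mw C) (Mw D) (Mw U) (Mw F) (Mw V) + (W7 (Mw A) (Mw B) (Mw C) (Mw D) (Mw U) (Mw F) (Mw V))) + (Q6 (Mw A) (Mw C) (Mw B) (Mw D) (Mw U * Mw V) (Mw F) - (((Mw U)) * (Q6 (Mw A) (Mw C) (Mw B) (Mw D) (Mw V) (Mw F))) - ((Q6 (Mw A) (Mw C) (Mw B) (Mw D) (Mw U) (Mw F)) * ((Mw V))) + (W7 (Mw A) (Mw C) (Mw B) (Mw D) (Mw U) (Mw F) (Mw V) + (W7 (Mw A) (Mw C) (Mw B) (Mw D) (Mw U) (Mw F) (Mw V)))) + (((Mw U)) * (Q23s (Mw A) (Mw B) (Mw C) (Mw D) (Mw V) (Mw F))) + ((Q23s (Mw A) (Mw B) (Mw C) (Mw D) (Mw U) (Mw F)) * ((Mw V))) - (W7 (Mw A) (Mw B) (Mw C) (Mw D) (Mw U) (Mw F) (Mw V) + (W7 (Mw A) (Mw C) (Mw B) (Mw D) (Mw U) (Mw F) (Mw V))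 + (W7 (Mw A) (Mw B) (Mw C) (Mw D) (Mw U) (Mw F) (Mw V) + (W7 (Mw A) (Mw C) (Mw B) (Mw D) (Mw U) (Mw F) (Mw V)))) by ncu2.
imemb HI.
Qed.

Lemma Q23slot6 (I : ZX -> Prop) (HI : ideal_ok I) (m : nat) (HC : PC I m) (HS : PS I m) (HQ : PQ I m) (A B C D E U V : wd) :
  (sz A + sz B + sz C + sz D + sz E + sz U + sz V <= m.+1)%N ->
  I (Q23s (Mw A) (Mw B) (Mw C) (Mw D) (Mw E) (Mw (wcat U V))).
Proof.
move=> Hb.
rewrite Mw_wcat.
have h1 := DQ6 _ HI _ HC HS A B C D E U V ltac:(bnd).
rewrite ?Mw_wcat in h1.
have h2 := DQ6 _ HI _ HC HS A C B D E U V ltac:(bnd).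
rewrite ?Mw_wcat in h2.
have h3 := (HQ A B C D E V ltac:(bnd)).1.
rewrite ?Mw_wcat in h3.
have h4 := (HQ A B C D E U ltac:(bnd)).1.
rewrite ?Mw_wcat in h4.
have h5 := Wsw23 _ HI _ HC HS A B C D E U V ltac:(bnd).
rewrite ?Mw_wcat in h5.
have -> : Q23s (Mw A) (Mw B) (Mw C) (Mw D) (Mw E) (Mw U * Mw V) =
  Q6 (Mw A) (Mw B) (Mw C) (Mw D) (Mw E) (Mw U * Mw V) - (((Mw U)) * (Q6 (Mw A) (Mw B) (Mw C) (Mw D) (Mw E) (Mw V))) - ((Q6 (Mw A) (Mw B) (Mw C) (Mw D) (Mw E) (Mw U)) * ((Mw V))) + (W7 (Mw A) (Mw B) (Mw C) (Mw D) (Mw E) (Mw U) (Mw V) + (W7 (Mw A) (Mw B) (Mw C) (Mw D) (Mw E) (Mw U) (Mw V))) + (Q6 (Mw A) (Mw C) (Mw B) (Mw D) (Mw E) (Mw U * Mw V) - (((Mw U)) * (Q6 (Mw A) (Mw C) (Mw B) (Mw D) (Mw E) (Mw V))) - ((Q6 (Mw A) (Mw C) (Mw B) (Mw D) (Mw E) (Mw U)) * ((Mw V))) + (W7 (Mw A) (Mw C) (Mw B) (Mw D) (Mw E) (Mw U) (Mw V) + (W7 (Mw A) (Mw C) (Mw B) (Mw D) (Mw E) (Mw U) (Mw V)))) + (((Mw U)) * (Q23s (Mw A) (Mw B) (Mw C) (Mw D) (Mw E) (Mw V))) + ((Q23s (Mw A) (Mw B) (Mw C) (Mw D) (Mw E)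 (Mw U)) * ((Mw V))) - (W7 (Mw A) (Mw B) (Mw C) (Mw D) (Mw E) (Mw U) (Mw V) + (W7 (Mw A) (Mw C) (Mw B) (Mw D) (Mw E) (Mw U) (Mw V)) + (W7 (Mw A) (Mw B) (Mw C) (Mw D) (Mw E) (Mw U) (Mw V) + (W7 (Mw A) (Mw C) (Mw B) (Mw D) (Mw E) (Mw U) (Mw V)))) by ncu2.
imemb HI.
Qed.

Lemma Q45slot1 (I : ZX -> Prop) (HI : ideal_ok I) (m : nat) (HC : PC I m) (HS : PS I m) (HQ : PQ I m) (U V B C D E F : wd) :
  (sz U + sz V + sz B + sz C + sz D + sz E + sz F <= m.+1)%N ->
  I (Q45s (Mw (wcat U V)) (Mw B) (Mw C) (Mw D) (Mw E) (Mw F)).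
Proof.
move=> Hb.
rewrite Mw_wcat.
have h1 := DQ1 _ HI _ HC HS U V B C D E F ltac:(bnd).
rewrite ?Mw_wcat in h1.
have h2 := DQ1 _ HI _ HC HS U V B C E D F ltac:(bnd).
rewrite ?Mw_wcat in h2.
have h3 := (HQ V B C D E F ltac:(bnd)).2.
rewrite ?Mw_wcat in h3.
have h4 := (HQ U B C D E F ltac:(bnd)).2.
rewrite ?Mw_wcat in h4.
have h5 := Wsw45 _ HI _ HC HS U B C D E F V ltac:(bnd).
rewrite ?Mw_wcat in h5.
have -> : Q45s (Mw U * Mw V) (Mw B) (Mw C) (Mw D) (Mw E) (Mw F) =
  Q6 (Mw U * Mw V) (Mw B) (Mw C) (Mw D) (Mw E) (Mw F) - (((Mw U)) * (Q6 (Mw V) (Mw B) (Mw C) (Mw D) (Mw E) (Mw F))) - ((Q6 (Mw U) (Mw B) (Mw C) (Mw D) (Mw E) (Mw F)) * ((Mw V))) + (W7 (Mw U) (Mw B) (Mw C) (Mw D) (Mw E) (Mw F) (Mw V) + (W7 (Mw U) (Mw B) (Mw C) (Mw D) (Mw E) (Mw F) (Mw V))) + (Q6 (Mw U * Mw V) (Mw B) (Mw C) (Mw E) (Mw D) (Mw F) - (((Mw U)) * (Q6 (Mw V) (Mw B) (Mw C) (Mw E) (Mw D) (Mw F))) - ((Q6 (Mw U) (Mw B) (Mw C) (Mw E) (Mw D) (Mw F)) * ((Mw V))) + (W7 (Mw U) (Mw B) (Mw C) (Mw E) (Mw D) (Mw F) (Mw V) + (W7 (Mw U) (Mw B) (Mw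 C) (Mw E) (Mw D) (Mw F) (Mw V)))) + (((Mw U)) * (Q45s (Mw V) (Mw B) (Mw C) (Mw D) (Mw E) (Mw F))) + ((Q45s (Mw U) (Mw B) (Mw C) (Mw D) (Mw E) (Mw F)) * ((Mw V))) - (W7 (Mw U) (Mw B) (Mw C) (Mw D) (Mw E) (Mw F) (Mw V) + (W7 (Mw U) (Mw B) (Mw C) (Mw E) (Mw D) (Mw F) (Mw V)) + (W7 (Mw U) (Mw B) (Mw C) (Mw D) (Mw E) (Mw F) (Mw V) + (W7 (Mw U) (Mw B) (Mw C) (Mw E) (Mw D) (Mw F) (Mw V)))) by ncu2.
imemb HI.
Qed.

Lemma Q45slot2 (I : ZX -> Prop) (HI : ideal_ok I) (m : nat) (HC : PC I m) (HS : PS I m) (HQ : PQ I m) (A U V C D E F : wd) :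
  (sz A + sz U + sz V + sz C + sz D + sz E + sz F <= m.+1)%N ->
  I (Q45s (Mw A) (Mw (wcat U V)) (Mw C) (Mw D) (Mw E) (Mw F)).
Proof.
move=> Hb.
rewrite Mw_wcat.
have h1 := DQ2 _ HI _ HC HS A U V C D E F ltac:(bnd).
rewrite ?Mw_wcat in h1.
have h2 := DQ2 _ HI _ HC HS A U V C E D F ltac:(bnd).
rewrite ?Mw_wcat in h2.
have h3 := (HQ A V C D E F ltac:(bnd)).2.
rewrite ?Mw_wcat in h3.
have h4 := (HQ A U C D E F ltac:(bnd)).2.
rewrite ?Mw_wcat in h4.
have h5 := Wsw45 _ HI _ HC HS A U C D E F V ltac:(bnd).
rewrite ?Mw_wcat in h5.
have -> : Q45s (Mw A) (Mw U * Mw V) (Mw C) (Mw D) (Mw E) (Mw F) =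
  Q6 (Mw A) (Mw U * Mw V) (Mw C) (Mw D) (Mw E) (Mw F) - (((Mw U)) * (Q6 (Mw A) (Mw V) (Mw C) (Mw D) (Mw E) (Mw F))) - ((Q6 (Mw A) (Mw U) (Mw C) (Mw D) (Mw E) (Mw F)) * ((Mw V))) + (W7 (Mw A) (Mw U) (Mw C) (Mw D) (Mw E) (Mw F) (Mw V) + (W7 (Mw A) (Mw U) (Mw C) (Mw D) (Mw E) (Mw F) (Mw V))) + (Q6 (Mw A) (Mw U * Mw V) (Mw C) (Mw E) (Mw D) (Mw F) - (((Mw U)) * (Q6 (Mw A) (Mw V) (Mw C) (Mw E) (Mw D) (Mw F))) - ((Q6 (Mw A) (Mw U) (Mw C) (Mw E) (Mw D) (Mw F)) * ((Mw V))) + (W7 (Mw A) (Mw U) (Mw C) (Mw E) (Mw D) (Mw F) (Mw V) + (W7 (Mw A) (Mw U) (Mw C) (Mw E) (Mw D) (Mw F) (Mw V)))) + (((Mw U)) * (Q45s (Mw A) (Mw V) (Mw C) (Mw D) (Mw E) (Mw F))) + ((Q45s (Mw A) (Mw U) (Mw C) (Mw D) (Mw E) (Mw F)) * ((Mw V))) - (W7 (Mw A) (Mw U) (Mw C) (Mw D) (Mw E) (Mw F) (Mw V) + (W7 (Mw A) (Mw U) (Mw C) (Mw E) (Mw D) (Mw F) (Mw V)) + (W7 (Mw A) (Mw U) (Mw C) (Mw D) (Mw E) (Mw F) (Mw V) + (W7 (Mw A) (Mw U) (Mw C) (Mw E) (Mw D) (Mw F) (Mw V)))) by ncu2.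
imemb HI.
Qed.

Lemma Q45slot3 (I : ZX -> Prop) (HI : ideal_ok I) (m : nat) (HC : PC I m) (HS : PS I m) (HQ : PQ I m) (A B U V D E F : wd) :
  (sz A + sz B + sz U + sz V + sz D + sz E + sz F <= m.+1)%N ->
  I (Q45s (Mw A) (Mw B) (Mw (wcat U V)) (Mw D) (Mw E) (Mw F)).
Proof.
move=> Hb.
rewrite Mw_wcat.
have h1 := DQ3 _ HI _ HC HS A B U V D E F ltac:(bnd).
rewrite ?Mw_wcat in h1.
have h2 := DQ3 _ HI _ HC HS A B U V E D F ltac:(bnd).
rewrite ?Mw_wcat in h2.
have h3 := (HQ A B V D E F ltac:(bnd)).2.
rewrite ?Mw_wcat in h3.
have h4 := (HQ A B U D E F ltac:(bnd)).2.
rewrite ?Mw_wcat in h4.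
have h5 := Wsw45 _ HI _ HC HS A B U D E F V ltac:(bnd).
rewrite ?Mw_wcat in h5.
have -> : Q45s (Mw A) (Mw B) (Mw U * Mw V) (Mw D) (Mw E) (Mw F) =
  Q6 (Mw A) (Mw B) (Mw U * Mw V) (Mw D) (Mw E) (Mw F) - (((Mw U)) * (Q6 (Mw A) (Mw B) (Mw V) (Mw D) (Mw E) (Mw F))) - ((Q6 (Mw A) (Mw B) (Mw U) (Mw D) (Mw E) (Mw F)) * ((Mw V))) + (W7 (Mw A) (Mw B) (Mw U) (Mw D) (Mw E) (Mw F) (Mw V) + (W7 (Mw A) (Mw B) (Mw U) (Mw D) (Mw E) (Mw F) (Mw V))) + (Q6 (Mw A) (Mw B) (Mw U * Mw V) (Mw E) (Mw D) (Mw F) - (((Mw U)) * (Q6 (Mw A) (Mw B) (Mw V) (Mw E) (Mw D) (Mw F))) - ((Q6 (Mw A) (Mw B) (Mw U) (Mw E) (Mw D) (Mw F)) * ((Mw V))) + (W7 (Mw A) (Mw B) (Mw U) (Mw E) (Mw D) (Mw F) (Mw V) + (W7 (Mw A) (Mw B) (Mw U) (Mw E) (Mw D) (Mw F) (Mw V)))) + (((Mw U)) * (Q45s (Mw A) (Mw B) (Mw V) (Mw D) (Mw E) (Mw F))) + ((Q45s (Mw A) (Mw B) (Mw U) (Mw D) (Mw E) (Mw F)) * ((Mw V))) - (W7 (Mw A) (Mw B) (Mw U) (Mw D) (Mw E) (Mw F) (Mw V) + (W7 (Mw A) (Mw B) (Mw U) (Mw E) (Mw D) (Mw F) (Mw V))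 + (W7 (Mw A) (Mw B) (Mw U) (Mw D) (Mw E) (Mw F) (Mw V) + (W7 (Mw A) (Mw B) (Mw U) (Mw E) (Mw D) (Mw F) (Mw V)))) by ncu2.
imemb HI.
Qed.

Lemma Q45slot4 (I : ZX -> Prop) (HI : ideal_ok I) (m : nat) (HC : PC I m) (HS : PS I m) (HQ : PQ I m) (A B C U V E F : wd) :
  (sz A + sz B + sz C + sz U + sz V + sz E + sz F <= m.+1)%N ->
  I (Q45s (Mw A) (Mw B) (Mw C) (Mw (wcat U V)) (Mw E) (Mw F)).
Proof.
move=> Hb.
rewrite Mw_wcat.
have h1 := DQ4 _ HI _ HC HS A B C U V E F ltac:(bnd).
rewrite ?Mw_wcat in h1.
have h2 := DQ5 _ HI _ HC HS A B C E U V F ltac:(bnd).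
rewrite ?Mw_wcat in h2.
have h3 := (HQ A B C V E F ltac:(bnd)).2.
rewrite ?Mw_wcat in h3.
have h4 := (HQ A B C U E F ltac:(bnd)).2.
rewrite ?Mw_wcat in h4.
have h5 := Wsw45 _ HI _ HC HS A B C U E F V ltac:(bnd).
rewrite ?Mw_wcat in h5.
have -> : Q45s (Mw A) (Mw B) (Mw C) (Mw U * Mw V) (Mw E) (Mw F) =
  Q6 (Mw A) (Mw B) (Mw C) (Mw U * Mw V) (Mw E) (Mw F) - (((Mw U)) * (Q6 (Mw A) (Mw B) (Mw C) (Mw V) (Mw E) (Mw F))) - ((Q6 (Mw A) (Mw B) (Mw C) (Mw U) (Mw E) (Mw F)) * ((Mw V))) + (W7 (Mw A) (Mw B) (Mw C) (Mw U) (Mw E) (Mw F) (Mw V) + (W7 (Mw A) (Mw B) (Mw C) (Mw U) (Mw E) (Mw F) (Mw V))) + (Q6 (Mw A) (Mw B) (Mw C) (Mw E) (Mw U * Mw V) (Mw F) - (((Mw U)) * (Q6 (Mw A) (Mw B) (Mw C) (Mw E) (Mw V) (Mw F))) - ((Q6 (Mw A) (Mw B) (Mw C) (Mw E) (Mw U) (Mw F)) * ((Mw V))) + (W7 (Mw A) (Mw B) (Mw C) (Mw E) (Mw U) (Mw F) (Mw V) + (W7 (Mw A) (Mw B) (Mw C) (Mw E) (Mw U) (Mw F) (Mw V)))) + (((Mw U)) * (Q45s (Mw A) (Mw B) (Mw C) (Mw V) (Mw E) (Mw F))) + ((Q45s (Mw A) (Mw B) (Mw C) (Mw U) (Mw E)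 (Mw F)) * ((Mw V))) - (W7 (Mw A) (Mw B) (Mw C) (Mw U) (Mw E) (Mw F) (Mw V) + (W7 (Mw A) (Mw B) (Mw C) (Mw E) (Mw U) (Mw F) (Mw V)) + (W7 (Mw A) (Mw B) (Mw C) (Mw U) (Mw E) (Mw F) (Mw V) + (W7 (Mw A) (Mw B) (Mw C) (Mw E) (Mw U) (Mw F) (Mw V)))) by ncu2.
imemb HI.
Qed.

Lemma Q45slot5 (I : ZX -> Prop) (HI : ideal_ok I) (m : nat) (HC : PC I m) (HS : PS I m) (HQ : PQ I m) (A B C D U V F : wd) :
  (sz A + sz B + sz C + sz D + sz U + sz V + sz F <= m.+1)%N ->
  I (Q45s (Mw A) (Mw B) (Mw C) (Mw D) (Mw (wcat U V)) (Mw F)).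
Proof.
move=> Hb.
rewrite Mw_wcat.
have h1 := DQ5 _ HI _ HC HS A B C D U V F ltac:(bnd).
rewrite ?Mw_wcat in h1.
have h2 := DQ4 _ HI _ HC HS A B C U V D F ltac:(bnd).
rewrite ?Mw_wcat in h2.
have h3 := (HQ A B C D V F ltac:(bnd)).2.
rewrite ?Mw_wcat in h3.
have h4 := (HQ A B C D U F ltac:(bnd)).2.
rewrite ?Mw_wcat in h4.
have h5 := Wsw45 _ HI _ HC HS A B C D U F V ltac:(bnd).
rewrite ?Mw_wcat in h5.
have -> : Q45s (Mw A) (Mw B) (Mw C) (Mw D) (Mw U * Mw V) (Mw F) =
  Q6 (Mw A) (Mw B) (Mw C) (Mw D) (Mw U * Mw V) (Mw F) - (((Mw U)) * (Q6 (Mw A) (Mw B) (Mw C) (Mw D) (Mw V) (Mw F))) - ((Q6 (Mw A) (Mw B) (Mw C) (Mw D) (Mw U) (Mw F)) * ((Mw V))) + (W7 (Mw A) (Mw B) (Mw C) (Mw D) (Mw U) (Mw F) (Mw V) + (W7 (Mw A) (Mw B) (Mw C) (Mw D) (Mw U) (Mw F) (Mw V))) + (Q6 (Mw A) (Mw B) (Mw C) (Mw U * Mw V) (Mw D) (Mw F) - (((Mw U)) * (Q6 (Mw A) (Mw B) (Mw C) (Mw V) (Mw D) (Mw F))) - ((Q6 (Mw A) (Mw B) (Mw C) (Mw U) (Mw D) (Mw F)) * ((Mw V))) + (W7 (Mw A) (Mw B) (Mw C) (Mw U) (Mw D) (Mw F) (Mw V) + (W7 (Mw A) (Mw B) (Mw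 C) (Mw U) (Mw D) (Mw F) (Mw V)))) + (((Mw U)) * (Q45s (Mw A) (Mw B) (Mw C) (Mw D) (Mw V) (Mw F))) + ((Q45s (Mw A) (Mw B) (Mw C) (Mw D) (Mw U) (Mw F)) * ((Mw V))) - (W7 (Mw A) (Mw B) (Mw C) (Mw D) (Mw U) (Mw F) (Mw V) + (W7 (Mw A) (Mw B) (Mw C) (Mw U) (Mw D) (Mw F) (Mw V)) + (W7 (Mw A) (Mw B) (Mw C) (Mw D) (Mw U) (Mw F) (Mw V) + (W7 (Mw A) (Mw B) (Mw C) (Mw U) (Mw D) (Mw F) (Mw V)))) by ncu2.
imemb HI.
Qed.

Lemma Q45slot6 (I : ZX -> Prop) (HI : ideal_ok I) (m : nat) (HC : PC I m) (HS : PS I m) (HQ : PQ I m) (A B C D E U V : wd) :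
  (sz A + sz B + sz C + sz D + sz E + sz U + sz V <= m.+1)%N ->
  I (Q45s (Mw A) (Mw B) (Mw C) (Mw D) (Mw E) (Mw (wcat U V))).
Proof.
move=> Hb.
rewrite Mw_wcat.
have h1 := DQ6 _ HI _ HC HS A B C D E U V ltac:(bnd).
rewrite ?Mw_wcat in h1.
have h2 := DQ6 _ HI _ HC HS A B C E D U V ltac:(bnd).
rewrite ?Mw_wcat in h2.
have h3 := (HQ A B C D E V ltac:(bnd)).2.
rewrite ?Mw_wcat in h3.
have h4 := (HQ A B C D E U ltac:(bnd)).2.
rewrite ?Mw_wcat in h4.
have h5 := Wsw45 _ HI _ HC HS A B C D E U V ltac:(bnd).
rewrite ?Mw_wcat in h5.
have -> : Q45s (Mw A) (Mw B) (Mw C) (Mw D) (Mw E) (Mw U * Mw V) =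
  Q6 (Mw A) (Mw B) (Mw C) (Mw D) (Mw E) (Mw U * Mw V) - (((Mw U)) * (Q6 (Mw A) (Mw B) (Mw C) (Mw D) (Mw E) (Mw V))) - ((Q6 (Mw A) (Mw B) (Mw C) (Mw D) (Mw E) (Mw U)) * ((Mw V))) + (W7 (Mw A) (Mw B) (Mw C) (Mw D) (Mw E) (Mw U) (Mw V) + (W7 (Mw A) (Mw B) (Mw C) (Mw D) (Mw E) (Mw U) (Mw V))) + (Q6 (Mw A) (Mw B) (Mw C) (Mw E) (Mw D) (Mw U * Mw V) - (((Mw U)) * (Q6 (Mw A) (Mw B) (Mw C) (Mw E) (Mw D) (Mw V))) - ((Q6 (Mw A) (Mw B) (Mw C) (Mw E) (Mw D) (Mw U)) * ((Mw V))) + (W7 (Mw A) (Mw B) (Mw C) (Mw E) (Mw D) (Mw U) (Mw V) + (W7 (Mw A) (Mw B) (Mw C) (Mw E) (Mw D) (Mw U) (Mw V)))) + (((Mw U)) * (Q45s (Mw A) (Mw B) (Mw C) (Mw D) (Mw E) (Mw V))) + ((Q45s (Mw A) (Mw B) (Mw C) (Mw D) (Mw E) (Mw U)) * ((Mw V))) - (W7 (Mw A) (Mw B) (Mw C) (Mw D) (Mw E) (Mw U) (Mw V) + (W7 (Mw A) (Mw B) (Mw C) (Mw E) (Mw D) (Mw U) (Mw V)) + (W7 (Mw A) (Mw B) (Mw C) (Mw D) (Mw E) (Mw U) (Mw V) + (W7 (Mw A) (Mw B) (Mw C) (Mw E) (Mw D) (Mw U) (Mw V)))) by ncu2.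
imemb HI.
Qed.


Unset Implicit Arguments.

Lemma DS1 (I : ZX -> Prop) (HI : ideal_ok I) (m : nat) (HC : PC I m) (HK1 : PK I m.+1) (HQ1 : PQ I m.+1) (U V B C D E : wd) :
  (sz U + sz V + sz B + sz C + sz D + sz E <= m.+1)%N ->
  I (S5 (Mw U * Mw V) (Mw B) (Mw C) (Mw D) (Mw E) - (((Mw U)) * (S5 (Mw V) (Mw B) (Mw C) (Mw D) (Mw E))) - ((S5 (Mw U) (Mw B) (Mw C) (Mw D) (Mw E)) * ((Mw V)))).
Proof.
move=> Hb.
have h1 := HC C D E V ltac:(bnd).
rewrite ?Mw_wcat in h1.
have -> : S5 (Mw U * Mw V) (Mw B) (Mw C) (Mw D) (Mw E) - (((Mw U)) * (S5 (Mw V) (Mw B) (Mw C) (Mw D) (Mw E))) - ((S5 (Mw U) (Mw B) (Mw C) (Mw D) (Mw E)) * ((Mw V))) =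
  - ((comm (Mw U) (Mw B)) * (c4 (Mw C) (Mw D) (Mw E) (Mw V))) by ncu2.
imemb HI.
Qed.

Lemma DS3 (I : ZX -> Prop) (HI : ideal_ok I) (m : nat) (HC : PC I m) (HK1 : PK I m.+1) (HQ1 : PQ I m.+1) (A B U V D E : wd) :
  (sz A + sz B + sz U + sz V + sz D + sz E <= m.+1)%N ->
  I (S5 (Mw A) (Mw B) (Mw U * Mw V) (Mw D) (Mw E) - (((Mw U)) * (S5 (Mw A) (Mw B) (Mw V) (Mw D) (Mw E))) - ((S5 (Mw A) (Mw B) (Mw U) (Mw D) (Mw E)) * ((Mw V)))).
Proof.
move=> Hb.
have h1 := HK1 A B U V D E ltac:(bnd).
rewrite ?Mw_wcat in h1.
have h2 := (HQ1 A B U D V E ltac:(bnd)).2.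
rewrite ?Mw_wcat in h2.
have h3 := (HQ1 A B U E V D ltac:(bnd)).2.
rewrite ?Mw_wcat in h3.
have -> : S5 (Mw A) (Mw B) (Mw U * Mw V) (Mw D) (Mw E) - (((Mw U)) * (S5 (Mw A) (Mw B) (Mw V) (Mw D) (Mw E))) - ((S5 (Mw A) (Mw B) (Mw U) (Mw D) (Mw E)) * ((Mw V))) =
  K6 (Mw A) (Mw B) (Mw U) (Mw V) (Mw D) (Mw E) + (Q45s (Mw A) (Mw B) (Mw U) (Mw D) (Mw V) (Mw E)) + (Q45s (Mw A) (Mw B) (Mw U) (Mw E) (Mw V) (Mw D)) by ncu2.
imemb HI.
Qed.

Lemma DS5 (I : ZX -> Prop) (HI : ideal_ok I) (m : nat) (HC : PC I m) (HK1 : PK I m.+1) (HQ1 : PQ I m.+1) (A B C D U V : wd) :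
  (sz A + sz B + sz C + sz D + sz U + sz V <= m.+1)%N ->
  I (S5 (Mw A) (Mw B) (Mw C) (Mw D) (Mw U * Mw V) - (((Mw U)) * (S5 (Mw A) (Mw B) (Mw C) (Mw D) (Mw V))) - ((S5 (Mw A) (Mw B) (Mw C) (Mw D) (Mw U)) * ((Mw V)))).
Proof.
move=> Hb.
have h1 := HK1 A B U C D V ltac:(bnd).
rewrite ?Mw_wcat in h1.
have -> : S5 (Mw A) (Mw B) (Mw C) (Mw D) (Mw U * Mw V) - (((Mw U)) * (S5 (Mw A) (Mw B) (Mw C) (Mw D) (Mw V))) - ((S5 (Mw A) (Mw B) (Mw C) (Mw D) (Mw U)) * ((Mw V))) =
  K6 (Mw A) (Mw B) (Mw U) (Mw C) (Mw D) (Mw V) by ncu2.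
imemb HI.
Qed.

Lemma DS2 (I : ZX -> Prop) (HI : ideal_ok I) (m : nat) (HC : PC I m) (HK1 : PK I m.+1) (HQ1 : PQ I m.+1) (A U V C D E : wd) :
  (sz A + sz U + sz V + sz C + sz D + sz E <= m.+1)%N ->
  I (S5 (Mw A) (Mw U * Mw V) (Mw C) (Mw D) (Mw E) - (((Mw U)) * (S5 (Mw A) (Mw V) (Mw C) (Mw D) (Mw E))) - ((S5 (Mw A) (Mw U) (Mw C) (Mw D) (Mw E)) * ((Mw V)))).
Proof.
move=> Hb.
have h1 := DS1 _ HI _ HC HK1 HQ1 U V A C D E ltac:(bnd).
rewrite ?Mw_wcat in h1.
have -> : S5 (Mw A) (Mw U * Mw V) (Mw C) (Mw D) (Mw E) - (((Mw U)) * (S5 (Mw A) (Mw V) (Mw C) (Mw D) (Mw E))) - ((S5 (Mw A) (Mw U) (Mw C) (Mw D) (Mw E)) * ((Mw V))) =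
  - (S5 (Mw U * Mw V) (Mw A) (Mw C) (Mw D) (Mw E) - (((Mw U)) * (S5 (Mw V) (Mw A) (Mw C) (Mw D) (Mw E))) - ((S5 (Mw U) (Mw A) (Mw C) (Mw D) (Mw E)) * ((Mw V)))) by ncu2.
imemb HI.
Qed.

Lemma DS4 (I : ZX -> Prop) (HI : ideal_ok I) (m : nat) (HC : PC I m) (HK1 : PK I m.+1) (HQ1 : PQ I m.+1) (A B C U V E : wd) :
  (sz A + sz B + sz C + sz U + sz V + sz E <= m.+1)%N ->
  I (S5 (Mw A) (Mw B) (Mw C) (Mw U * Mw V) (Mw E) - (((Mw U)) * (S5 (Mw A) (Mw B) (Mw C) (Mw V) (Mw E))) - ((S5 (Mw A) (Mw B) (Mw C) (Mw U) (Mw E)) * ((Mw V)))).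
Proof.
move=> Hb.
have h1 := DS3 _ HI _ HC HK1 HQ1 A B U V C E ltac:(bnd).
rewrite ?Mw_wcat in h1.
have -> : S5 (Mw A) (Mw B) (Mw C) (Mw U * Mw V) (Mw E) - (((Mw U)) * (S5 (Mw A) (Mw B) (Mw C) (Mw V) (Mw E))) - ((S5 (Mw A) (Mw B) (Mw C) (Mw U) (Mw E)) * ((Mw V))) =
  - (S5 (Mw A) (Mw B) (Mw U * Mw V) (Mw C) (Mw E) - (((Mw U)) * (S5 (Mw A) (Mw B) (Mw V) (Mw C) (Mw E))) - ((S5 (Mw A) (Mw B) (Mw U) (Mw C) (Mw E)) * ((Mw V)))) by ncu2.
imemb HI.
Qed.

Lemma S23slot1 (I : ZX -> Prop) (HI : ideal_ok I) (m : nat) (HC : PC I m) (HS : PS I m) (HK1 : PK I m.+1) (HQ1 : PQ I m.+1) (U V B C D E : wd) :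
  (sz U + sz V + sz B + sz C + sz D + sz E <= m.+1)%N ->
  I (S23s (Mw (wcat U V)) (Mw B) (Mw C) (Mw D) (Mw E)).
Proof.
move=> Hb.
rewrite Mw_wcat.
have h1 := DS1 _ HI _ HC HK1 HQ1 U V B C D E ltac:(bnd).
rewrite ?Mw_wcat in h1.
have h2 := DS1 _ HI _ HC HK1 HQ1 U V C B D E ltac:(bnd).
rewrite ?Mw_wcat in h2.
have h3 := (HS V B C D E ltac:(bnd)).1.
rewrite ?Mw_wcat in h3.
have h4 := (HS U B C D E ltac:(bnd)).1.
rewrite ?Mw_wcat in h4.
have -> : S23s (Mw U * Mw V) (Mw B) (Mw C) (Mw D) (Mw E) =
  S5 (Mw U * Mw V) (Mw B) (Mw C) (Mw D) (Mw E) - (((Mw U)) * (S5 (Mw V) (Mw B) (Mw C) (Mw D) (Mw E))) - ((S5 (Mw U) (Mw B) (Mw C) (Mw D) (Mw E)) * ((Mw V))) + (S5 (Mw U * Mw V) (Mw C) (Mw B) (Mw D) (Mw E) - (((Mw U)) * (S5 (Mw V) (Mw C) (Mw B) (Mw D) (Mw E))) - ((S5 (Mw U) (Mw C) (Mw B) (Mw D) (Mw E)) * ((Mw V)))) + (((Mw U)) * (S23s (Mw V) (Mw B) (Mw C) (Mw D) (Mw E))) + ((S23s (Mw U) (Mw B) (Mw C) (Mw D) (Mw E)) * ((Mw V))) by ncu2.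
imemb HI.
Qed.

Lemma S23slot2 (I : ZX -> Prop) (HI : ideal_ok I) (m : nat) (HC : PC I m) (HS : PS I m) (HK1 : PK I m.+1) (HQ1 : PQ I m.+1) (A U V C D E : wd) :
  (sz A + sz U + sz V + sz C + sz D + sz E <= m.+1)%N ->
  I (S23s (Mw A) (Mw (wcat U V)) (Mw C) (Mw D) (Mw E)).
Proof.
move=> Hb.
rewrite Mw_wcat.
have h1 := DS2 _ HI _ HC HK1 HQ1 A U V C D E ltac:(bnd).
rewrite ?Mw_wcat in h1.
have h2 := DS3 _ HI _ HC HK1 HQ1 A C U V D E ltac:(bnd).
rewrite ?Mw_wcat in h2.
have h3 := (HS A V C D E ltac:(bnd)).1.
rewrite ?Mw_wcat in h3.
have h4 := (HS A U C D E ltac:(bnd)).1.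
rewrite ?Mw_wcat in h4.
have -> : S23s (Mw A) (Mw U * Mw V) (Mw C) (Mw D) (Mw E) =
  S5 (Mw A) (Mw U * Mw V) (Mw C) (Mw D) (Mw E) - (((Mw U)) * (S5 (Mw A) (Mw V) (Mw C) (Mw D) (Mw E))) - ((S5 (Mw A) (Mw U) (Mw C) (Mw D) (Mw E)) * ((Mw V))) + (S5 (Mw A) (Mw C) (Mw U * Mw V) (Mw D) (Mw E) - (((Mw U)) * (S5 (Mw A) (Mw C) (Mw V) (Mw D) (Mw E))) - ((S5 (Mw A) (Mw C) (Mw U) (Mw D) (Mw E)) * ((Mw V)))) + (((Mw U)) * (S23s (Mw A) (Mw V) (Mw C) (Mw D) (Mw E))) + ((S23s (Mw A) (Mw U) (Mw C) (Mw D) (Mw E)) * ((Mw V))) by ncu2.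
imemb HI.
Qed.

Lemma S23slot3 (I : ZX -> Prop) (HI : ideal_ok I) (m : nat) (HC : PC I m) (HS : PS I m) (HK1 : PK I m.+1) (HQ1 : PQ I m.+1) (A B U V D E : wd) :
  (sz A + sz B + sz U + sz V + sz D + sz E <= m.+1)%N ->
  I (S23s (Mw A) (Mw B) (Mw (wcat U V)) (Mw D) (Mw E)).
Proof.
move=> Hb.
rewrite Mw_wcat.
have h1 := DS3 _ HI _ HC HK1 HQ1 A B U V D E ltac:(bnd).
rewrite ?Mw_wcat in h1.
have h2 := DS2 _ HI _ HC HK1 HQ1 A U V B D E ltac:(bnd).
rewrite ?Mw_wcat in h2.
have h3 := (HS A B V D E ltac:(bnd)).1.
rewrite ?Mw_wcat in h3.
have h4 := (HS A B U D E ltac:(bnd)).1.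
rewrite ?Mw_wcat in h4.
have -> : S23s (Mw A) (Mw B) (Mw U * Mw V) (Mw D) (Mw E) =
  S5 (Mw A) (Mw B) (Mw U * Mw V) (Mw D) (Mw E) - (((Mw U)) * (S5 (Mw A) (Mw B) (Mw V) (Mw D) (Mw E))) - ((S5 (Mw A) (Mw B) (Mw U) (Mw D) (Mw E)) * ((Mw V))) + (S5 (Mw A) (Mw U * Mw V) (Mw B) (Mw D) (Mw E) - (((Mw U)) * (S5 (Mw A) (Mw V) (Mw B) (Mw D) (Mw E))) - ((S5 (Mw A) (Mw U) (Mw B) (Mw D) (Mw E)) * ((Mw V)))) + (((Mw U)) * (S23s (Mw A) (Mw B) (Mw V) (Mw D) (Mw E))) + ((S23s (Mw A) (Mw B) (Mw U) (Mw D) (Mw E)) * ((Mw V))) by ncu2.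
imemb HI.
Qed.

Lemma S23slot4 (I : ZX -> Prop) (HI : ideal_ok I) (m : nat) (HC : PC I m) (HS : PS I m) (HK1 : PK I m.+1) (HQ1 : PQ I m.+1) (A B C U V E : wd) :
  (sz A + sz B + sz C + sz U + sz V + sz E <= m.+1)%N ->
  I (S23s (Mw A) (Mw B) (Mw C) (Mw (wcat U V)) (Mw E)).
Proof.
move=> Hb.
rewrite Mw_wcat.
have h1 := DS4 _ HI _ HC HK1 HQ1 A B C U V E ltac:(bnd).
rewrite ?Mw_wcat in h1.
have h2 := DS4 _ HI _ HC HK1 HQ1 A C B U V E ltac:(bnd).
rewrite ?Mw_wcat in h2.
have h3 := (HS A B C V E ltac:(bnd)).1.
rewrite ?Mw_wcat in h3.
have h4 := (HS A B C U E ltac:(bnd)).1.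
rewrite ?Mw_wcat in h4.
have -> : S23s (Mw A) (Mw B) (Mw C) (Mw U * Mw V) (Mw E) =
  S5 (Mw A) (Mw B) (Mw C) (Mw U * Mw V) (Mw E) - (((Mw U)) * (S5 (Mw A) (Mw B) (Mw C) (Mw V) (Mw E))) - ((S5 (Mw A) (Mw B) (Mw C) (Mw U) (Mw E)) * ((Mw V))) + (S5 (Mw A) (Mw C) (Mw B) (Mw U * Mw V) (Mw E) - (((Mw U)) * (S5 (Mw A) (Mw C) (Mw B) (Mw V) (Mw E))) - ((S5 (Mw A) (Mw C) (Mw B) (Mw U) (Mw E)) * ((Mw V)))) + (((Mw U)) * (S23s (Mw A) (Mw B) (Mw C) (Mw V) (Mw E))) + ((S23s (Mw A) (Mw B) (Mw C) (Mw U) (Mw E)) * ((Mw V))) by ncu2.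
imemb HI.
Qed.

Lemma S23slot5 (I : ZX -> Prop) (HI : ideal_ok I) (m : nat) (HC : PC I m) (HS : PS I m) (HK1 : PK I m.+1) (HQ1 : PQ I m.+1) (A B C D U V : wd) :
  (sz A + sz B + sz C + sz D + sz U + sz V <= m.+1)%N ->
  I (S23s (Mw A) (Mw B) (Mw C) (Mw D) (Mw (wcat U V))).
Proof.
move=> Hb.
rewrite Mw_wcat.
have h1 := DS5 _ HI _ HC HK1 HQ1 A B C D U V ltac:(bnd).
rewrite ?Mw_wcat in h1.
have h2 := DS5 _ HI _ HC HK1 HQ1 A C B D U V ltac:(bnd).
rewrite ?Mw_wcat in h2.
have h3 := (HS A B C D V ltac:(bnd)).1.
rewrite ?Mw_wcat in h3.
have h4 := (HS A B C D U ltac:(bnd)).1.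
rewrite ?Mw_wcat in h4.
have -> : S23s (Mw A) (Mw B) (Mw C) (Mw D) (Mw U * Mw V) =
  S5 (Mw A) (Mw B) (Mw C) (Mw D) (Mw U * Mw V) - (((Mw U)) * (S5 (Mw A) (Mw B) (Mw C) (Mw D) (Mw V))) - ((S5 (Mw A) (Mw B) (Mw C) (Mw D) (Mw U)) * ((Mw V))) + (S5 (Mw A) (Mw C) (Mw B) (Mw D) (Mw U * Mw V) - (((Mw U)) * (S5 (Mw A) (Mw C) (Mw B) (Mw D) (Mw V))) - ((S5 (Mw A) (Mw C) (Mw B) (Mw D) (Mw U)) * ((Mw V)))) + (((Mw U)) * (S23s (Mw A) (Mw B) (Mw C) (Mw D) (Mw V))) + ((S23s (Mw A) (Mw B) (Mw C) (Mw D) (Mw U)) * ((Mw V))) by ncu2.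
imemb HI.
Qed.

Lemma S45slot1 (I : ZX -> Prop) (HI : ideal_ok I) (m : nat) (HC : PC I m) (HS : PS I m) (HK1 : PK I m.+1) (HQ1 : PQ I m.+1) (U V B C D E : wd) :
  (sz U + sz V + sz B + sz C + sz D + sz E <= m.+1)%N ->
  I (S45s (Mw (wcat U V)) (Mw B) (Mw C) (Mw D) (Mw E)).
Proof.
move=> Hb.
rewrite Mw_wcat.
have h1 := DS1 _ HI _ HC HK1 HQ1 U V B C D E ltac:(bnd).
rewrite ?Mw_wcat in h1.
have h2 := DS1 _ HI _ HC HK1 HQ1 U V B C E D ltac:(bnd).
rewrite ?Mw_wcat in h2.
have h3 := (HS V B C D E ltac:(bnd)).2.
rewrite ?Mw_wcat in h3.
have h4 := (HS U B C D E ltac:(bnd)).2.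
rewrite ?Mw_wcat in h4.
have -> : S45s (Mw U * Mw V) (Mw B) (Mw C) (Mw D) (Mw E) =
  S5 (Mw U * Mw V) (Mw B) (Mw C) (Mw D) (Mw E) - (((Mw U)) * (S5 (Mw V) (Mw B) (Mw C) (Mw D) (Mw E))) - ((S5 (Mw U) (Mw B) (Mw C) (Mw D) (Mw E)) * ((Mw V))) + (S5 (Mw U * Mw V) (Mw B) (Mw C) (Mw E) (Mw D) - (((Mw U)) * (S5 (Mw V) (Mw B) (Mw C) (Mw E) (Mw D))) - ((S5 (Mw U) (Mw B) (Mw C) (Mw E) (Mw D)) * ((Mw V)))) + (((Mw U)) * (S45s (Mw V) (Mw B) (Mw C) (Mw D) (Mw E))) + ((S45s (Mw U) (Mw B) (Mw C) (Mw D) (Mw E)) * ((Mw V))) by ncu2.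
imemb HI.
Qed.

Lemma S45slot2 (I : ZX -> Prop) (HI : ideal_ok I) (m : nat) (HC : PC I m) (HS : PS I m) (HK1 : PK I m.+1) (HQ1 : PQ I m.+1) (A U V C D E : wd) :
  (sz A + sz U + sz V + sz C + sz D + sz E <= m.+1)%N ->
  I (S45s (Mw A) (Mw (wcat U V)) (Mw C) (Mw D) (Mw E)).
Proof.
move=> Hb.
rewrite Mw_wcat.
have h1 := DS2 _ HI _ HC HK1 HQ1 A U V C D E ltac:(bnd).
rewrite ?Mw_wcat in h1.
have h2 := DS2 _ HI _ HC HK1 HQ1 A U V C E D ltac:(bnd).
rewrite ?Mw_wcat in h2.
have h3 := (HS A V C D E ltac:(bnd)).2.
rewrite ?Mw_wcat in h3.
have h4 := (HS A U C D E ltac:(bnd)).2.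
rewrite ?Mw_wcat in h4.
have -> : S45s (Mw A) (Mw U * Mw V) (Mw C) (Mw D) (Mw E) =
  S5 (Mw A) (Mw U * Mw V) (Mw C) (Mw D) (Mw E) - (((Mw U)) * (S5 (Mw A) (Mw V) (Mw C) (Mw D) (Mw E))) - ((S5 (Mw A) (Mw U) (Mw C) (Mw D) (Mw E)) * ((Mw V))) + (S5 (Mw A) (Mw U * Mw V) (Mw C) (Mw E) (Mw D) - (((Mw U)) * (S5 (Mw A) (Mw V) (Mw C) (Mw E) (Mw D))) - ((S5 (Mw A) (Mw U) (Mw C) (Mw E) (Mw D)) * ((Mw V)))) + (((Mw U)) * (S45s (Mw A) (Mw V) (Mw C) (Mw D) (Mw E))) + ((S45s (Mw A) (Mw U) (Mw C) (Mw D) (Mw E)) * ((Mw V))) by ncu2.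
imemb HI.
Qed.

Lemma S45slot3 (I : ZX -> Prop) (HI : ideal_ok I) (m : nat) (HC : PC I m) (HS : PS I m) (HK1 : PK I m.+1) (HQ1 : PQ I m.+1) (A B U V D E : wd) :
  (sz A + sz B + sz U + sz V + sz D + sz E <= m.+1)%N ->
  I (S45s (Mw A) (Mw B) (Mw (wcat U V)) (Mw D) (Mw E)).
Proof.
move=> Hb.
rewrite Mw_wcat.
have h1 := DS3 _ HI _ HC HK1 HQ1 A B U V D E ltac:(bnd).
rewrite ?Mw_wcat in h1.
have h2 := DS3 _ HI _ HC HK1 HQ1 A B U V E D ltac:(bnd).
rewrite ?Mw_wcat in h2.
have h3 := (HS A B V D E ltac:(bnd)).2.
rewrite ?Mw_wcat in h3.
have h4 := (HS A B U D E ltac:(bnd)).2.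
rewrite ?Mw_wcat in h4.
have -> : S45s (Mw A) (Mw B) (Mw U * Mw V) (Mw D) (Mw E) =
  S5 (Mw A) (Mw B) (Mw U * Mw V) (Mw D) (Mw E) - (((Mw U)) * (S5 (Mw A) (Mw B) (Mw V) (Mw D) (Mw E))) - ((S5 (Mw A) (Mw B) (Mw U) (Mw D) (Mw E)) * ((Mw V))) + (S5 (Mw A) (Mw B) (Mw U * Mw V) (Mw E) (Mw D) - (((Mw U)) * (S5 (Mw A) (Mw B) (Mw V) (Mw E) (Mw D))) - ((S5 (Mw A) (Mw B) (Mw U) (Mw E) (Mw D)) * ((Mw V)))) + (((Mw U)) * (S45s (Mw A) (Mw B) (Mw V) (Mw D) (Mw E))) + ((S45s (Mw A) (Mw B) (Mw U) (Mw D) (Mw E)) * ((Mw V))) by ncu2.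
imemb HI.
Qed.

Lemma S45slot4 (I : ZX -> Prop) (HI : ideal_ok I) (m : nat) (HC : PC I m) (HS : PS I m) (HK1 : PK I m.+1) (HQ1 : PQ I m.+1) (A B C U V E : wd) :
  (sz A + sz B + sz C + sz U + sz V + sz E <= m.+1)%N ->
  I (S45s (Mw A) (Mw B) (Mw C) (Mw (wcat U V)) (Mw E)).
Proof.
move=> Hb.
rewrite Mw_wcat.
have h1 := DS4 _ HI _ HC HK1 HQ1 A B C U V E ltac:(bnd).
rewrite ?Mw_wcat in h1.
have h2 := DS5 _ HI _ HC HK1 HQ1 A B C E U V ltac:(bnd).
rewrite ?Mw_wcat in h2.
have h3 := (HS A B C V E ltac:(bnd)).2.
rewrite ?Mw_wcat in h3.
have h4 := (HS A B C U E ltac:(bnd)).2.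
rewrite ?Mw_wcat in h4.
have -> : S45s (Mw A) (Mw B) (Mw C) (Mw U * Mw V) (Mw E) =
  S5 (Mw A) (Mw B) (Mw C) (Mw U * Mw V) (Mw E) - (((Mw U)) * (S5 (Mw A) (Mw B) (Mw C) (Mw V) (Mw E))) - ((S5 (Mw A) (Mw B) (Mw C) (Mw U) (Mw E)) * ((Mw V))) + (S5 (Mw A) (Mw B) (Mw C) (Mw E) (Mw U * Mw V) - (((Mw U)) * (S5 (Mw A) (Mw B) (Mw C) (Mw E) (Mw V))) - ((S5 (Mw A) (Mw B) (Mw C) (Mw E) (Mw U)) * ((Mw V)))) + (((Mw U)) * (S45s (Mw A) (Mw B) (Mw C) (Mw V) (Mw E))) + ((S45s (Mw A) (Mw B) (Mw C) (Mw U) (Mw E)) * ((Mw V))) by ncu2.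
imemb HI.
Qed.

Lemma S45slot5 (I : ZX -> Prop) (HI : ideal_ok I) (m : nat) (HC : PC I m) (HS : PS I m) (HK1 : PK I m.+1) (HQ1 : PQ I m.+1) (A B C D U V : wd) :
  (sz A + sz B + sz C + sz D + sz U + sz V <= m.+1)%N ->
  I (S45s (Mw A) (Mw B) (Mw C) (Mw D) (Mw (wcat U V))).
Proof.
move=> Hb.
rewrite Mw_wcat.
have h1 := DS5 _ HI _ HC HK1 HQ1 A B C D U V ltac:(bnd).
rewrite ?Mw_wcat in h1.
have h2 := DS4 _ HI _ HC HK1 HQ1 A B C U V D ltac:(bnd).
rewrite ?Mw_wcat in h2.
have h3 := (HS A B C D V ltac:(bnd)).2.
rewrite ?Mw_wcat in h3.
have h4 := (HS A B C D U ltac:(bnd)).2.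
rewrite ?Mw_wcat in h4.
have -> : S45s (Mw A) (Mw B) (Mw C) (Mw D) (Mw U * Mw V) =
  S5 (Mw A) (Mw B) (Mw C) (Mw D) (Mw U * Mw V) - (((Mw U)) * (S5 (Mw A) (Mw B) (Mw C) (Mw D) (Mw V))) - ((S5 (Mw A) (Mw B) (Mw C) (Mw D) (Mw U)) * ((Mw V))) + (S5 (Mw A) (Mw B) (Mw C) (Mw U * Mw V) (Mw D) - (((Mw U)) * (S5 (Mw A) (Mw B) (Mw C) (Mw V) (Mw D))) - ((S5 (Mw A) (Mw B) (Mw C) (Mw U) (Mw D)) * ((Mw V)))) + (((Mw U)) * (S45s (Mw A) (Mw B) (Mw C) (Mw D) (Mw V))) + ((S45s (Mw A) (Mw B) (Mw C) (Mw D) (Mw U)) * ((Mw V))) by ncu2.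
imemb HI.
Qed.

Lemma DC1 (I : ZX -> Prop) (HI : ideal_ok I) (m : nat) (HC : PC I m) (HS1 : PS I m.+1) (U V B C D : wd) :
  (sz U + sz V + sz B + sz C + sz D <= m.+1)%N ->
  I (c4 (Mw U * Mw V) (Mw B) (Mw C) (Mw D) - (((Mw U)) * (c4 (Mw V) (Mw B) (Mw C) (Mw D))) - ((c4 (Mw U) (Mw B) (Mw C) (Mw D)) * ((Mw V)))).
Proof.
move=> Hb.
have h1 := HC U B C D ltac:(bnd).
rewrite ?Mw_wcat in h1.
have h2 := HC U B C V ltac:(bnd).
rewrite ?Mw_wcat in h2.
have h3 := HC U B D C ltac:(bnd).
rewrite ?Mw_wcat in h3.
have h4 := HC U B D V ltac:(bnd).
rewrite ?Mw_wcat in h4.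
have h5 := HC U C D B ltac:(bnd).
rewrite ?Mw_wcat in h5.
have h6 := HC U C D V ltac:(bnd).
rewrite ?Mw_wcat in h6.
have h7 := (HS1 U C V B D ltac:(bnd)).1.
rewrite ?Mw_wcat in h7.
have h8 := (HS1 U V B C D ltac:(bnd)).1.
rewrite ?Mw_wcat in h8.
have h9 := (HS1 U D V B C ltac:(bnd)).1.
rewrite ?Mw_wcat in h9.
have h10 := (HS1 U V B D C ltac:(bnd)).2.
rewrite ?Mw_wcat in h10.
have h11 := (HS1 U V B C D ltac:(bnd)).1.
rewrite ?Mw_wcat in h11.
have h12 := (HS1 V D U B C ltac:(bnd)).1.
rewrite ?Mw_wcat in h12.
have h13 := (HS1 V U B D C ltac:(bnd)).2.
rewrite ?Mw_wcat in h13.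
have h14 := (HS1 U V B C D ltac:(bnd)).1.
rewrite ?Mw_wcat in h14.
have h15 := (HS1 V C U B D ltac:(bnd)).1.
rewrite ?Mw_wcat in h15.
have h16 := (HS1 U V B C D ltac:(bnd)).1.
rewrite ?Mw_wcat in h16.
have h17 := (HS1 B V U C D ltac:(bnd)).1.
rewrite ?Mw_wcat in h17.
have -> : c4 (Mw U * Mw V) (Mw B) (Mw C) (Mw D) - (((Mw U)) * (c4 (Mw V) (Mw B) (Mw C) (Mw D))) - ((c4 (Mw U) (Mw B) (Mw C) (Mw D)) * ((Mw V))) =
  S23s (Mw U) (Mw C) (Mw V) (Mw B) (Mw D) + (S23s (Mw U) (Mw V) (Mw B) (Mw C) (Mw D)) + (S23s (Mw U) (Mw D) (Mw V) (Mw B) (Mw C) + (S45s (Mw U) (Mw V) (Mw B) (Mw D) (Mw C)) + (- (S23s (Mw U) (Mw V) (Mw B) (Mw C) (Mw D)))) + (S23s (Mw V) (Mw D) (Mw U) (Mw B) (Mw C) + (S45s (Mw V) (Mw U) (Mw B) (Mw D) (Mw C)) + (S23s (Mw U) (Mw V) (Mw B) (Mw C) (Mw D))) + (S23s (Mw V) (Mw C) (Mw U) (Mw B) (Mw D) + (- (S23s (Mw U) (Mw V) (Mw B) (Mw C) (Mw D)))) + (- (S23s (Mw B) (Mw V) (Mw U) (Mw C) (Mw D))) + (((Mw V)) * (c4 (Mw U) (Mw B) (Mw C) (Mw D)) + ((c4 (Mw U) (Mw B) (Mw C) (Mw V)) * ((Mw D))) - (((Mw D)) * (c4 (Mw U)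 (Mw B) (Mw C) (Mw V))) - ((c4 (Mw U) (Mw B) (Mw C) (Mw D)) * ((Mw V)))) + (((Mw V)) * (c4 (Mw U) (Mw B) (Mw D) (Mw C)) + ((c4 (Mw U) (Mw B) (Mw D) (Mw V)) * ((Mw C))) - (((Mw C)) * (c4 (Mw U) (Mw B) (Mw D) (Mw V))) - ((c4 (Mw U) (Mw B) (Mw D) (Mw C)) * ((Mw V)))) + (((Mw V)) * (c4 (Mw U) (Mw C) (Mw D) (Mw B)) + ((c4 (Mw U) (Mw C) (Mw D) (Mw V)) * ((Mw B))) - (((Mw B)) * (c4 (Mw U) (Mw C) (Mw D) (Mw V))) - ((c4 (Mw U) (Mw C) (Mw D) (Mw B)) * ((Mw V)))) by ncu2.
imemb HI.
Qed.

Lemma DC3 (I : ZX -> Prop) (HI : ideal_ok I) (m : nat) (HC : PC I m) (HS1 : PS I m.+1) (A B U V D : wd) :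
  (sz A + sz B + sz U + sz V + sz D <= m.+1)%N ->
  I (c4 (Mw A) (Mw B) (Mw U * Mw V) (Mw D) - (((Mw U)) * (c4 (Mw A) (Mw B) (Mw V) (Mw D))) - ((c4 (Mw A) (Mw B) (Mw U) (Mw D)) * ((Mw V)))).
Proof.
move=> Hb.
have h1 := HC A B U D ltac:(bnd).
rewrite ?Mw_wcat in h1.
have h2 := HC A B U V ltac:(bnd).
rewrite ?Mw_wcat in h2.
have h3 := (HS1 D V A B U ltac:(bnd)).1.
rewrite ?Mw_wcat in h3.
have h4 := (HS1 D A B V U ltac:(bnd)).2.
rewrite ?Mw_wcat in h4.
have h5 := (HS1 D A U B V ltac:(bnd)).1.
rewrite ?Mw_wcat in h5.
have -> : c4 (Mw A) (Mw B) (Mw U * Mw V) (Mw D) - (((Mw U)) * (c4 (Mw A) (Mw B) (Mw V) (Mw D))) - ((c4 (Mw A) (Mw B) (Mw U) (Mw D)) * ((Mw V))) =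
  - (S23s (Mw D) (Mw V) (Mw A) (Mw B) (Mw U)) + (- (S45s (Mw D) (Mw A) (Mw B) (Mw V) (Mw U))) + (- (S23s (Mw D) (Mw A) (Mw U) (Mw B) (Mw V))) + (((Mw V)) * (c4 (Mw A) (Mw B) (Mw U) (Mw D)) + ((c4 (Mw A) (Mw B) (Mw U) (Mw V)) * ((Mw D))) - (((Mw D)) * (c4 (Mw A) (Mw B) (Mw U) (Mw V))) - ((c4 (Mw A) (Mw B) (Mw U) (Mw D)) * ((Mw V)))) by ncu2.
imemb HI.
Qed.

Lemma DC4 (I : ZX -> Prop) (HI : ideal_ok I) (m : nat) (HC : PC I m) (HS1 : PS I m.+1) (A B C U V : wd) :
  (sz A + sz B + sz C + sz U + sz V <= m.+1)%N ->
  I (c4 (Mw A) (Mw B) (Mw C) (Mw U * Mw V) - (((Mw U)) * (c4 (Mw A) (Mw B) (Mw C) (Mw V))) - ((c4 (Mw A) (Mw B) (Mw C) (Mw U)) * ((Mw V)))).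
Proof.
move=> Hb.

have -> : c4 (Mw A) (Mw B) (Mw C) (Mw U * Mw V) - (((Mw U)) * (c4 (Mw A) (Mw B) (Mw C) (Mw V))) - ((c4 (Mw A) (Mw B) (Mw C) (Mw U)) * ((Mw V))) =
  0 by ncu2.
imemb HI.
Qed.

Lemma DC2 (I : ZX -> Prop) (HI : ideal_ok I) (m : nat) (HC : PC I m) (HS1 : PS I m.+1) (A U V C D : wd) :
  (sz A + sz U + sz V + sz C + sz D <= m.+1)%N ->
  I (c4 (Mw A) (Mw U * Mw V) (Mw C) (Mw D) - (((Mw U)) * (c4 (Mw A) (Mw V) (Mw C) (Mw D))) - ((c4 (Mw A) (Mw U) (Mw C) (Mw D)) * ((Mw V)))).
Proof.
move=> Hb.
have h1 := DC1 _ HI _ HC HS1 U V A C D ltac:(bnd).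
rewrite ?Mw_wcat in h1.
have -> : c4 (Mw A) (Mw U * Mw V) (Mw C) (Mw D) - (((Mw U)) * (c4 (Mw A) (Mw V) (Mw C) (Mw D))) - ((c4 (Mw A) (Mw U) (Mw C) (Mw D)) * ((Mw V))) =
  - (c4 (Mw U * Mw V) (Mw A) (Mw C) (Mw D) - (((Mw U)) * (c4 (Mw V) (Mw A) (Mw C) (Mw D))) - ((c4 (Mw U) (Mw A) (Mw C) (Mw D)) * ((Mw V)))) by ncu2.
imemb HI.
Qed.

Lemma Cslot1 (I : ZX -> Prop) (HI : ideal_ok I) (m : nat) (HC : PC I m) (HS1 : PS I m.+1) (U V B C D : wd) :
  (sz U + sz V + sz B + sz C + sz D <= m.+1)%N ->
  I (c4 (Mw (wcat U V)) (Mw B) (Mw C) (Mw D)).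
Proof.
move=> Hb.
rewrite Mw_wcat.
have h1 := DC1 _ HI _ HC HS1 U V B C D ltac:(bnd).
rewrite ?Mw_wcat in h1.
have h2 := HC V B C D ltac:(bnd).
rewrite ?Mw_wcat in h2.
have h3 := HC U B C D ltac:(bnd).
rewrite ?Mw_wcat in h3.
have -> : c4 (Mw U * Mw V) (Mw B) (Mw C) (Mw D) =
  c4 (Mw U * Mw V) (Mw B) (Mw C) (Mw D) - (((Mw U)) * (c4 (Mw V) (Mw B) (Mw C) (Mw D))) - ((c4 (Mw U) (Mw B) (Mw C) (Mw D)) * ((Mw V))) + (((Mw U)) * (c4 (Mw V) (Mw B) (Mw C) (Mw D))) + ((c4 (Mw U) (Mw B) (Mw C) (Mw D)) * ((Mw V))) by ncu2.
imemb HI.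
Qed.

Lemma Cslot2 (I : ZX -> Prop) (HI : ideal_ok I) (m : nat) (HC : PC I m) (HS1 : PS I m.+1) (A U V C D : wd) :
  (sz A + sz U + sz V + sz C + sz D <= m.+1)%N ->
  I (c4 (Mw A) (Mw (wcat U V)) (Mw C) (Mw D)).
Proof.
move=> Hb.
rewrite Mw_wcat.
have h1 := DC2 _ HI _ HC HS1 A U V C D ltac:(bnd).
rewrite ?Mw_wcat in h1.
have h2 := HC A V C D ltac:(bnd).
rewrite ?Mw_wcat in h2.
have h3 := HC A U C D ltac:(bnd).
rewrite ?Mw_wcat in h3.
have -> : c4 (Mw A) (Mw U * Mw V) (Mw C) (Mw D) =
  c4 (Mw A) (Mw U * Mw V) (Mw C) (Mw D) - (((Mw U)) * (c4 (Mw A) (Mw V) (Mw C) (Mw D))) - ((c4 (Mw A) (Mw U) (Mw C) (Mw D)) * ((Mw V))) + (((Mw U)) * (c4 (Mw A) (Mw V) (Mw C) (Mw D))) + ((c4 (Mw A) (Mw U) (Mw C) (Mw D)) * ((Mw V))) by ncu2.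
imemb HI.
Qed.

Lemma Cslot3 (I : ZX -> Prop) (HI : ideal_ok I) (m : nat) (HC : PC I m) (HS1 : PS I m.+1) (A B U V D : wd) :
  (sz A + sz B + sz U + sz V + sz D <= m.+1)%N ->
  I (c4 (Mw A) (Mw B) (Mw (wcat U V)) (Mw D)).
Proof.
move=> Hb.
rewrite Mw_wcat.
have h1 := DC3 _ HI _ HC HS1 A B U V D ltac:(bnd).
rewrite ?Mw_wcat in h1.
have h2 := HC A B V D ltac:(bnd).
rewrite ?Mw_wcat in h2.
have h3 := HC A B U D ltac:(bnd).
rewrite ?Mw_wcat in h3.
have -> : c4 (Mw A) (Mw B) (Mw U * Mw V) (Mw D) =
  c4 (Mw A) (Mw B) (Mw U * Mw V) (Mw D) - (((Mw U)) * (c4 (Mw A) (Mw B) (Mw V) (Mw D))) - ((c4 (Mw A) (Mw B) (Mw U) (Mw D)) * ((Mw V))) + (((Mw U)) * (c4 (Mw A) (Mw B) (Mw V) (Mw D))) + ((c4 (Mw A) (Mw B) (Mw U) (Mw D)) * ((Mw V))) by ncu2.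
imemb HI.
Qed.

Lemma Cslot4 (I : ZX -> Prop) (HI : ideal_ok I) (m : nat) (HC : PC I m) (HS1 : PS I m.+1) (A B C U V : wd) :
  (sz A + sz B + sz C + sz U + sz V <= m.+1)%N ->
  I (c4 (Mw A) (Mw B) (Mw C) (Mw (wcat U V))).
Proof.
move=> Hb.
rewrite Mw_wcat.
have h1 := DC4 _ HI _ HC HS1 A B C U V ltac:(bnd).
rewrite ?Mw_wcat in h1.
have h2 := HC A B C V ltac:(bnd).
rewrite ?Mw_wcat in h2.
have h3 := HC A B C U ltac:(bnd).
rewrite ?Mw_wcat in h3.
have -> : c4 (Mw A) (Mw B) (Mw C) (Mw U * Mw V) =
  c4 (Mw A) (Mw B) (Mw C) (Mw U * Mw V) - (((Mw U)) * (c4 (Mw A) (Mw B) (Mw C) (Mw V))) - ((c4 (Mw A) (Mw B) (Mw C) (Mw U)) * ((Mw V))) + (((Mw U)) * (c4 (Mw A) (Mw B) (Mw C) (Mw V))) + ((c4 (Mw A) (Mw B) (Mw C) (Mw U)) * ((Mw V))) by ncu2.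
imemb HI.
Qed.


Unset Implicit Arguments.

Lemma PK_step (I : ZX -> Prop) (HI : ideal_ok I) (m : nat) (HC : PC I m) (HS : PS I m) (HK : PK I m)
  (BK : forall a b c d e f : nat, I (K6 (xv a) (xv b) (xv c) (xv d) (xv e) (xv f))) : PK I m.+1.
Proof.
move=> a b c d e f Hb.
case: a Hb => a0 [|a1 a] Hb; last first.
  apply: (Kslot1 _ HI _ HC HS HK (a0,[::]) (a1,a) b c d e f); bnd.
case: b Hb => b0 [|b1 b] Hb; last first.
  apply: (Kslot2 _ HI _ HC HS HK (a0,[::]) (b0,[::]) (b1,b) c d e f); bnd.
case: c Hb => c0 [|c1 c] Hb; last first.
  apply: (Kslot3 _ HI _ HC HS HK (a0,[::]) (b0,[::]) (c0,[::]) (c1,c) d e f); bnd.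
case: d Hb => d0 [|d1 d] Hb; last first.
  apply: (Kslot4 _ HI _ HC HS HK (a0,[::]) (b0,[::]) (c0,[::]) (d0,[::]) (d1,d) e f); bnd.
case: e Hb => e0 [|e1 e] Hb; last first.
  apply: (Kslot5 _ HI _ HC HS HK (a0,[::]) (b0,[::]) (c0,[::]) (d0,[::]) (e0,[::]) (e1,e) f); bnd.
case: f Hb => f0 [|f1 f] Hb; last first.
  apply: (Kslot6 _ HI _ HC HS HK (a0,[::]) (b0,[::]) (c0,[::]) (d0,[::]) (e0,[::]) (f0,[::]) (f1,f)); bnd.
rewrite /Mw /= !mulr1; apply: BK.
Qed.

Lemma PQ_step (I : ZX -> Prop) (HI : ideal_ok I) (m : nat) (HC : PC I m) (HS : PS I m) (HQ : PQ I m)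
  (BQ : forall a b c d e f : nat, I (Q23s (xv a) (xv b) (xv c) (xv d) (xv e) (xv f)) /\ I (Q45s (xv a) (xv b) (xv c) (xv d) (xv e) (xv f))) : PQ I m.+1.
Proof.
move=> a b c d e f Hb.
case: a Hb => a0 [|a1 a] Hb; last first.
  split; [apply: (Q23slot1 _ HI _ HC HS HQ (a0,[::]) (a1,a) b c d e f) | apply: (Q45slot1 _ HI _ HC HS HQ (a0,[::]) (a1,a) b c d e f)]; bnd.
case: b Hb => b0 [|b1 b] Hb; last first.
  split; [apply: (Q23slot2 _ HI _ HC HS HQ (a0,[::]) (b0,[::]) (b1,b) c d e f) | apply: (Q45slot2 _ HI _ HC HS HQ (a0,[::]) (b0,[::]) (b1,b) c d e f)]; bnd.
case: c Hb => c0 [|c1 c] Hb; last first.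
  split; [apply: (Q23slot3 _ HI _ HC HS HQ (a0,[::]) (b0,[::]) (c0,[::]) (c1,c) d e f) | apply: (Q45slot3 _ HI _ HC HS HQ (a0,[::]) (b0,[::]) (c0,[::]) (c1,c) d e f)]; bnd.
case: d Hb => d0 [|d1 d] Hb; last first.
  split; [apply: (Q23slot4 _ HI _ HC HS HQ (a0,[::]) (b0,[::]) (c0,[::]) (d0,[::]) (d1,d) e f) | apply: (Q45slot4 _ HI _ HC HS HQ (a0,[::]) (b0,[::]) (c0,[::]) (d0,[::]) (d1,d) e f)]; bnd.
case: e Hb => e0 [|e1 e] Hb; last first.
  split; [apply: (Q23slot5 _ HI _ HC HS HQ (a0,[::]) (b0,[::]) (c0,[::]) (d0,[::]) (e0,[::]) (e1,e) f) | apply: (Q45slot5 _ HI _ HC HS HQ (a0,[::]) (b0,[::]) (c0,[::]) (d0,[::]) (e0,[::]) (e1,e) f)]; bnd.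
case: f Hb => f0 [|f1 f] Hb; last first.
  split; [apply: (Q23slot6 _ HI _ HC HS HQ (a0,[::]) (b0,[::]) (c0,[::]) (d0,[::]) (e0,[::]) (f0,[::]) (f1,f)) | apply: (Q45slot6 _ HI _ HC HS HQ (a0,[::]) (b0,[::]) (c0,[::]) (d0,[::]) (e0,[::]) (f0,[::]) (f1,f))]; bnd.
rewrite /Mw /= !mulr1; apply: BQ.
Qed.

Lemma PS_step (I : ZX -> Prop) (HI : ideal_ok I) (m : nat) (HC : PC I m) (HS : PS I m) (HK1 : PK I m.+1) (HQ1 : PQ I m.+1)
  (BS : forall a b c d e : nat, I (S23s (xv a) (xv b) (xv c) (xv d) (xv e)) /\ I (S45s (xv a) (xv b) (xv c) (xv d) (xv e))) : PS I m.+1.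
Proof.
move=> a b c d e Hb.
case: a Hb => a0 [|a1 a] Hb; last first.
  split; [apply: (S23slot1 _ HI _ HC HS HK1 HQ1 (a0,[::]) (a1,a) b c d e) | apply: (S45slot1 _ HI _ HC HS HK1 HQ1 (a0,[::]) (a1,a) b c d e)]; bnd.
case: b Hb => b0 [|b1 b] Hb; last first.
  split; [apply: (S23slot2 _ HI _ HC HS HK1 HQ1 (a0,[::]) (b0,[::]) (b1,b) c d e) | apply: (S45slot2 _ HI _ HC HS HK1 HQ1 (a0,[::]) (b0,[::]) (b1,b) c d e)]; bnd.
case: c Hb => c0 [|c1 c] Hb; last first.
  split; [apply: (S23slot3 _ HI _ HC HS HK1 HQ1 (a0,[::]) (b0,[::]) (c0,[::]) (c1,c) d e) | apply: (S45slot3 _ HI _ HC HS HK1 HQ1 (a0,[::]) (b0,[::]) (c0,[::]) (c1,c) d e)]; bnd.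
case: d Hb => d0 [|d1 d] Hb; last first.
  split; [apply: (S23slot4 _ HI _ HC HS HK1 HQ1 (a0,[::]) (b0,[::]) (c0,[::]) (d0,[::]) (d1,d) e) | apply: (S45slot4 _ HI _ HC HS HK1 HQ1 (a0,[::]) (b0,[::]) (c0,[::]) (d0,[::]) (d1,d) e)]; bnd.
case: e Hb => e0 [|e1 e] Hb; last first.
  split; [apply: (S23slot5 _ HI _ HC HS HK1 HQ1 (a0,[::]) (b0,[::]) (c0,[::]) (d0,[::]) (e0,[::]) (e1,e)) | apply: (S45slot5 _ HI _ HC HS HK1 HQ1 (a0,[::]) (b0,[::]) (c0,[::]) (d0,[::]) (e0,[::]) (e1,e))]; bnd.
rewrite /Mw /= !mulr1; apply: BS.
Qed.

Lemma PC_step (I : ZX -> Prop) (HI : ideal_ok I) (m : nat) (HC : PC I m) (HS1 : PS I m.+1)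
  (BC : forall a b c d : nat, I (c4 (xv a) (xv b) (xv c) (xv d))) : PC I m.+1.
Proof.
move=> a b c d Hb.
case: a Hb => a0 [|a1 a] Hb; last first.
  apply: (Cslot1 _ HI _ HC HS1 (a0,[::]) (a1,a) b c d); bnd.
case: b Hb => b0 [|b1 b] Hb; last first.
  apply: (Cslot2 _ HI _ HC HS1 (a0,[::]) (b0,[::]) (b1,b) c d); bnd.
case: c Hb => c0 [|c1 c] Hb; last first.
  apply: (Cslot3 _ HI _ HC HS1 (a0,[::]) (b0,[::]) (c0,[::]) (c1,c) d); bnd.
case: d Hb => d0 [|d1 d] Hb; last first.
  apply: (Cslot4 _ HI _ HC HS1 (a0,[::]) (b0,[::]) (c0,[::]) (d0,[::]) (d1,d)); bnd.
rewrite /Mw /= !mulr1; apply: BC.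
Qed.

Unset Implicit Arguments.

Lemma all_levels (I : ZX -> Prop) (HI : ideal_ok I)
  (BC : forall a b c d : nat, I (c4 (xv a) (xv b) (xv c) (xv d)))
  (BK : forall a b c d e f : nat, I (K6 (xv a) (xv b) (xv c) (xv d) (xv e) (xv f)))
  (BS : forall a b c d e : nat, I (S23s (xv a) (xv b) (xv c) (xv d) (xv e)) /\ I (S45s (xv a) (xv b) (xv c) (xv d) (xv e)))
  (BQ : forall a b c d e f : nat, I (Q23s (xv a) (xv b) (xv c) (xv d) (xv e) (xv f)) /\ I (Q45s (xv a) (xv b) (xv c) (xv d) (xv e) (xv f))) :
  forall m, PK I m /\ PQ I m /\ PS I m /\ PC I m.
Proof.
elim=> [|m [HK [HQ [HS HC]]]].
  split; [|split; [|split]]; cbv beta delta [PK PQ PS PC]; intros; exfalso; bnd.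
have HK1 := PK_step I HI m HC HS HK BK.
have HQ1 := PQ_step I HI m HC HS HQ BQ.
have HS1 := PS_step I HI m HC HS HK1 HQ1 BS.
have HC1 := PC_step I HI m HC HS1 BC.
by split; [|split; [|split]].
Qed.

Lemma c4_all (I : ZX -> Prop) (HI : ideal_ok I)
  (HC : forall m, PC I m) : forall a b c d : ZX, I (c4 a b c d).
Proof.
have Hw : forall s1 s2 s3 s4 : seq nat, I (c4 (mon s1) (mon s2) (mon s3) (mon s4)).
  move=> [|x1 s1] s2 s3 s4.
    have -> : c4 (mon [::]) (mon s2) (mon s3) (mon s4) = 0 by rewrite /=; ncu.
    exact: (i0 HI).
  case: s2 => [|x2 s2].
    have -> : c4 (mon (x1 :: s1)) (mon [::]) (mon s3) (mon s4) = 0 by rewrite /=; ncu.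
    exact: (i0 HI).
  case: s3 => [|x3 s3].
    have -> : c4 (mon (x1 :: s1)) (mon (x2 :: s2)) (mon [::]) (mon s4) = 0 by rewrite /=; ncu.
    exact: (i0 HI).
  case: s4 => [|x4 s4].
    have -> : c4 (mon (x1 :: s1)) (mon (x2 :: s2)) (mon (x3 :: s3)) (mon [::]) = 0 by rewrite /=; ncu.
    exact: (i0 HI).
  exact: (HC _ (x1, s1) (x2, s2) (x3, s3) (x4, s4) (leqnn _)).
have H1 : forall a s2 s3 s4, I (c4 a (mon s2) (mon s3) (mon s4)).
  move=> a s2 s3 s4; elim/ZX_ind: a => [|x y Hx Hy|x Hx|s1].
  - have -> : c4 0 (mon s2) (mon s3) (mon s4) = 0 by ncu. exact: (i0 HI).
  - have -> : c4 (x + y) (mon s2) (mon s3) (mon s4) = c4 x (mon s2) (mon s3) (mon s4) + c4 y (mon s2) (mon s3) (mon s4) by ncu.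
    exact: (iadd HI).
  - have -> : c4 (- x) (mon s2) (mon s3) (mon s4) = - c4 x (mon s2) (mon s3) (mon s4) by ncu.
    exact: (iopp HI).
  - exact: Hw.
have H2 : forall a b s3 s4, I (c4 a b (mon s3) (mon s4)).
  move=> a b s3 s4; elim/ZX_ind: b => [|x y Hx Hy|x Hx|s2].
  - have -> : c4 a 0 (mon s3) (mon s4) = 0 by ncu. exact: (i0 HI).
  - have -> : c4 a (x + y) (mon s3) (mon s4) = c4 a x (mon s3) (mon s4) + c4 a y (mon s3) (mon s4) by ncu.
    exact: (iadd HI).
  - have -> : c4 a (- x) (mon s3) (mon s4) = - c4 a x (mon s3) (mon s4) by ncu.
    exact: (iopp HI).
  - exact: H1.
have H3 : forall a b c s4, I (c4 a b c (mon s4)).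
  move=> a b c s4; elim/ZX_ind: c => [|x y Hx Hy|x Hx|s3].
  - have -> : c4 a b 0 (mon s4) = 0 by ncu. exact: (i0 HI).
  - have -> : c4 a b (x + y) (mon s4) = c4 a b x (mon s4) + c4 a b y (mon s4) by ncu.
    exact: (iadd HI).
  - have -> : c4 a b (- x) (mon s4) = - c4 a b x (mon s4) by ncu.
    exact: (iopp HI).
  - exact: H2.
move=> a b c d; elim/ZX_ind: d => [|x y Hx Hy|x Hx|s4].
- have -> : c4 a b c 0 = 0 by ncu. exact: (i0 HI).
- have -> : c4 a b c (x + y) = c4 a b c x + c4 a b c y by ncu.
  exact: (iadd HI).
- have -> : c4 a b c (- x) = - c4 a b c x by ncu.
  exact: (iopp HI).
- exact: H3.
Qed.

Lemma c4_L : forall a b c d : ZX, lideal Gens (c4 a b c d).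
Proof.
apply: (c4_all _ L_ok) => m.
have := all_levels _ L_ok _ _ _ _ m.
case=> [| | | |_ [_ [_ H]]]; last exact: H.
- by move=> a b c d; apply: LC_L; exists a, [:: b; c; d].
- exact: K_L.
- by move=> a b c d e; split; [exact: S23_L | exact: S45_L].
- by move=> a b c d e f; split; [exact: Q23_L | exact: Q45_L].
Qed.

Theorem lemma3p2 : forall f : ZX, T4 f <-> lideal Gens f.
Proof.
move=> f; split.
- elim=> [g [a1 [a2 [a3 [a4 ->]]]]||g h _ Hg _ Hh|g _ Hg|r g _ Hg|g r _ Hg].
  + exact: c4_L.
  + exact: lideal_0.
  + exact: lideal_add.
  + exact: lideal_opp.
  + exact: lideal_mull.
  + exact: L_right.
- elim=> [g Hg||g h _ Hg _ Hh|g _ Hg|r g _ Hg].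
  + exact: Gens_T4.
  + exact: ideal2_0.
  + exact: ideal2_add.
  + exact: ideal2_opp.
  + exact: ideal2_mull.
Qed.
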